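(* Let $\Omega=(a,b)$, $1<p<\infty$, $k\ge1$, and $m,n$ measurable on $(a,b)$ with $0<\theta_-\le m,n\le\theta_+$. Fix a sign $\pm$, let $s>0$, $(\alpha(s),\beta(s))=(s^{-1}c^\pm_{k+1}(s),c^\pm_{k+1}(s))\in\mathcal{C}^\pm_k(m,n)$, and let $u\in W^{1,p}_0(a,b)$ be a nontrivial weak solution of $-(|u'|^{p-2}u')'=\alpha(s)m(u^+)^{p-1}-\beta(s)n(u^-)^{p-1}$ on $(a,b)$, $u(a)=u(b)=0$. Let $I_+$ be a nodal domain (maximal open interval) of $u$ on which $u>0$ and $I_-$ one on which $u<0$. Then $$\mu_1(I_+)\le C\gamma(s),\qquad \mu_1(I_-)\le Cs\gamma(s),$$ where $C=\frac{\theta_+}{\theta_-}\mu_{k+1}(\Omega)$, $\gamma(s)=1$ for $s\ge1$, $\gamma(s)=s^{-1}$ for $s<1$, $\mu_1(I)$ is the first Dirichlet eigenvalue of the one-dimensional $p$-Laplacian on $I$, and $\mu_{k+1}(\Omega)=\pi_p^p(k+1)^p(b-a)^{-p}$.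
   Context: $u^\pm=\max\{\pm u,0\}$. For an interval $I$ and weight $r$, $\lambda_1(r,I)=\inf\{\int_I|v'|^p/\int_I r|v|^p:\ v\in W^{1,p}_0(I)\setminus\{0\}\}$; $\mu_1(I)=\lambda_1(1,I)=\pi_p^p|I|^{-p}$ with $\pi_p=2(p-1)^{1/p}\int_0^1(1-t^p)^{-1/p}dt$. A partition in $\mathcal{P}_{k+1}$ is $a=t_0<\dots<t_{k+1}=b$, $I_j=(t_{j-1},t_j)$. $c^+_{k+1}(s)=\inf_{\mathcal{P}_{k+1}}\max\big(\{s\lambda_1(m,I_j): j\text{ odd}\}\cup\{\lambda_1(n,I_j): j\text{ even}\}\big)$ and $c^-_{k+1}(s)$ likewise with ''odd'' and ''even'' interchanged. $\mathcal{C}^\pm_k(m,n)$ is the Fučík curve whose eigenfunctions have $k$ interior zeros and positive (resp. negative) slope at $a$; $(s^{-1}c^\pm_{k+1}(s),c^\pm_{k+1}(s))$ is its intersection with the line $\beta=s\alpha$. *)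

(* Defs.v *)
From Stdlib Require Import Reals Lra List Arith.
Open Scope R_scope.

(* A McShane delta-fine division of [lo,hi]: consecutive intervals [x,y]
   covering [lo,hi], each with a tag t in [lo,hi] such that
   [x,y] is contained in (t - delta t, t + delta t).  McDiv lo hi d x P means
   P is such a division of [x,hi]. *)
Inductive McDiv (lo hi : R) (delta : R -> R) : R -> list (R * R * R) -> Prop :=
| md_nil : McDiv lo hi delta hi nil
| md_cons : forall x y t P,
    x < y -> lo <= t <= hi -> t - delta t < x -> y < t + delta t ->
    McDiv lo hi delta y P -> McDiv lo hi delta x ((x, y, t) :: P).

Definition rsum (f : R -> R) (P : list (R * R * R)) : R :=
  fold_right (fun xyt acc => let '(x, y, t) := xyt in f t * (y - x) + acc) 0 P.

(* The McShane integral of f over [a,b] (a < b) equals I.  On compact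
   intervals the McShane integral coincides with the Lebesgue integral. *)
Definition McShane_int (f : R -> R) (a b I : R) : Prop :=
  a < b /\
  forall eps, 0 < eps -> exists delta : R -> R, (forall t, 0 < delta t) /\
    forall P, McDiv a b delta a P -> Rabs (rsum f P - I) < eps.

Definition integrable (f : R -> R) (a b : R) : Prop := exists I, McShane_int f a b I.

(* Lebesgue measurability on [a,b]: every bounded truncation is integrable. *)
Definition measurable_on (f : R -> R) (a b : R) : Prop :=
  forall N, 0 < N -> integrable (fun x => Rmax (- N) (Rmin N (f x))) a b.

(* |x|^e convention: pw x e = x^e for x > 0, and 0 for x <= 0. *)
Definition pw (x e : R) : R := if Rle_dec x 0 then 0 else Rpower x e.

Definition pos_part (x : R) : R := Rmax x 0.
Definition neg_part (x : R) : R := Rmax (- x) 0.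

(* phi_p(x) = |x|^(p-2) x *)
Definition phip (p x : R) : R :=
  if Rlt_dec x 0 then - pw (- x) (p - 1) else pw x (p - 1).

(* v (its continuous representative) lies in W^{1,p}_0(c,d) with weak
   derivative g: g in L^p(c,d), v(x) = int_c^x g, v(c) = v(d) = 0. *)
Definition W0 (p c d : R) (v g : R -> R) : Prop :=
  c < d /\
  measurable_on g c d /\
  integrable (fun x => pw (Rabs (g x)) p) c d /\
  v c = 0 /\
  (forall x, c < x <= d -> McShane_int g c x (v x)) /\
  v d = 0.

Definition nontrivial_on (c d : R) (v : R -> R) : Prop :=
  exists x, c < x < d /\ v x <> 0.

Definition RQ (p : R) (r : R -> R) (c d : R) (q : R) : Prop :=
  exists v g A B, W0 p c d v g /\ nontrivial_on c d v /\
    McShane_int (fun x => pw (Rabs (g x)) p) c d A /\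
    McShane_int (fun x => r x * pw (Rabs (v x)) p) c d B /\
    q = A / B.

Definition is_inf (S : R -> Prop) (L : R) : Prop :=
  (forall q, S q -> L <= q) /\ (forall L', (forall q, S q -> L' <= q) -> L' <= L).

Definition is_lambda1 (p : R) (r : R -> R) (c d L : R) : Prop := is_inf (RQ p r c d) L.

Definition is_mu1 (p c d L : R) : Prop := is_lambda1 p (fun _ => 1) c d L.

Definition is_pi_p (p P : R) : Prop :=
  exists J, McShane_int (fun t => pw (1 - pw t p) (- (1 / p))) 0 1 J /\
            P = 2 * Rpower (p - 1) (1 / p) * J.

Definition is_partition (k : nat) (a b : R) (t : nat -> R) : Prop :=
  t 0%nat = a /\ t (S k) = b /\ (forall i, (i <= k)%nat -> t i < t (S i)).

(* sg = true : "+" (odd j -> s*lambda_1(m,I_j), even j -> lambda_1(n,I_j));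
   sg = false: "-" (odd and even interchanged). *)
Definition cw_coef (sg : bool) (s : R) (j : nat) : R :=
  if Bool.eqb (Nat.odd j) sg then s else 1.
Definition cw_weight (sg : bool) (m n : R -> R) (j : nat) : R -> R :=
  if Bool.eqb (Nat.odd j) sg then m else n.

Definition partition_value (p : R) (sg : bool) (s : R) (m n : R -> R) (k : nat)
    (t : nat -> R) (V : R) : Prop :=
  exists L : nat -> R,
    (forall j, (1 <= j <= S k)%nat ->
       is_lambda1 p (cw_weight sg m n j) (t (pred j)) (t j) (L j)) /\
    (forall j, (1 <= j <= S k)%nat -> cw_coef sg s j * L j <= V) /\
    (exists j, (1 <= j <= S k)%nat /\ V = cw_coef sg s j * L j).

Definition is_c (p : R) (sg : bool) (s : R) (m n : R -> R) (k : nat) (a b c : R) : Prop :=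
  is_inf (fun V => exists t, is_partition k a b t /\ partition_value p sg s m n k t V) c.

Definition weak_solution (p al be : R) (m n : R -> R) (a b : R) (u g : R -> R) : Prop :=
  W0 p a b u g /\
  forall phi psi, W0 p a b phi psi ->
    exists J,
      McShane_int (fun x => phip p (g x) * psi x) a b J /\
      McShane_int (fun x => (al * m x * pw (pos_part (u x)) (p - 1)
                             - be * n x * pw (neg_part (u x)) (p - 1)) * phi x) a b J.

Definition pos_nodal (a b : R) (u : R -> R) (c d : R) : Prop :=
  a <= c /\ c < d /\ d <= b /\ (forall x, c < x < d -> 0 < u x) /\
  ~ (0 < u c) /\ ~ (0 < u d).
Definition neg_nodal (a b : R) (u : R -> R) (c d : R) : Prop :=
  a <= c /\ c < d /\ d <= b /\ (forall x, c < x < d -> u x < 0) /\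
  ~ (u c < 0) /\ ~ (u d < 0).

Definition gamma (s : R) : R := if Rle_dec 1 s then 1 else / s.

(* Main.v *)
Require Import Defs.
From Stdlib Require Import Reals.
Open Scope R_scope.
From Stdlib Require Import Lra Lia List Classical IndefiniteDescription.
From Coquelicot Require Coquelicot.
Set Bullet Behavior "Strict Subproofs".

Module P1.
Set Bullet Behavior "Strict Subproofs".

Inductive GD (lo hi : R) (d : R -> R) : R -> R -> list (R * R * R) -> Prop :=
| gd_nil : forall z, GD lo hi d z z nil
| gd_cons : forall x y z t P, x < y -> lo <= t <= hi -> t - d t < x -> y < t + d t ->
    GD lo hi d y z P -> GD lo hi d x z ((x, y, t) :: P).

Lemma McDiv_GD lo hi d x P : McDiv lo hi d x P -> GD lo hi d x hi P.
Proof. induction 1; econstructor; eauto. Qed.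

Lemma GD_McDiv lo hi d x P : GD lo hi d x hi P -> McDiv lo hi d x P.
Proof.
  assert (G : forall z, GD lo hi d x z P -> z = hi -> McDiv lo hi d x P).
  { intros z H. induction H; intros; subst; [constructor|econstructor; eauto]. }
  intros H; eapply G; eauto.
Qed.

Lemma GD_le lo hi d x z P : GD lo hi d x z P -> x <= z.
Proof. induction 1; lra. Qed.

Lemma GD_app lo hi d x y z P1 P2 : GD lo hi d x y P1 -> GD lo hi d y z P2 -> GD lo hi d x z (P1 ++ P2).
Proof. induction 1; intros; simpl; auto. econstructor; eauto. Qed.

Lemma GD_widen lo hi lo' hi' d x z P : lo' <= lo -> hi <= hi' -> GD lo hi d x z P -> GD lo' hi' d x z P.
Proof. intros H1 H2; induction 1; econstructor; eauto; lra. Qed.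

Lemma GD_gauge lo hi d d' x z P : (forall t, lo <= t <= hi -> d t <= d' t) -> GD lo hi d x z P -> GD lo hi d' x z P.
Proof. intros Hd; induction 1; econstructor; eauto; specialize (Hd t H0); lra. Qed.

Lemma GD_tags lo hi d x z P : GD lo hi d x z P -> forall a b t, In (a,b,t) P -> lo <= t <= hi.
Proof. induction 1; simpl; intros; try tauto. destruct H4 as [E|E]; [inversion E; subst; auto|eauto]. Qed.

Lemma rsum_app f P1 P2 : rsum f (P1 ++ P2) = rsum f P1 + rsum f P2.
Proof. induction P1 as [|[[x y] t] P IH]; simpl; [lra|]. unfold rsum in *. simpl in *. rewrite IH. lra. Qed.

Lemma rsum_cons f x y t P : rsum f ((x,y,t)::P) = f t * (y - x) + rsum f P.
Proof. reflexivity. Qed.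

Lemma cousin lo hi d : (forall t, 0 < d t) -> lo <= hi ->
  exists P, GD lo hi d lo hi P.
Proof.
  intros Hd Hlh.
  set (T := fun x => lo <= x <= hi /\ exists P, GD lo hi d x hi P).
  set (E := fun y => T (- y)).
  assert (HE : bound E). { exists (- lo). intros y [Hy _]. lra. }
  assert (HE2 : exists y, E y). { exists (- hi). unfold E, T. rewrite Ropp_involutive. split; [lra|]. exists nil. constructor. }
  destruct (completeness E HE HE2) as [m [Hub Hlub]].
  set (z := - m).
  assert (Hz1 : lo <= z <= hi).
  { split.
    - unfold z. assert (m <= - lo). { apply Hlub. intros y [Hy _]. lra. } lra.
    - unfold z. assert (- hi <= m). { apply Hub. unfold E, T. rewrite Ropp_involutive. split; [lra|]. exists nil. constructor. } lra. }
  assert (Hy : exists y, T y /\ y < z + d z).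
  { destruct (Rlt_or_le (- (z + d z)) m) as [Hlt|Hge].
    - destruct (Classical_Pred_Type.not_all_not_ex _ (fun y => E y /\ - (z + d z) < y)) as [y [Ey Hy]].
      { intros Hn. assert (m <= - (z + d z)). { apply Hlub. intros y Ey. destruct (Rle_or_lt y (- (z + d z))); auto. exfalso. apply (Hn y). auto. } lra. }
      exists (- y). split; auto. lra.
    - exfalso. specialize (Hd z). assert (z = - m) by reflexivity. lra. }
  assert (HzT : T z).
  { destruct Hy as [y [[Hy1 [P HP]] Hy2]].
    assert (z <= y). { assert (- y <= m) by (apply Hub; unfold E; rewrite Ropp_involutive; split; [auto| exists P; auto]). unfold z; lra. }
    destruct (Req_dec z y) as [Heq|Hne]. { rewrite Heq. split; [auto| exists P; auto]. }
    split; auto. exists ((z, y, z) :: P). specialize (Hd z). econstructor; eauto; lra. }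
  destruct (Req_dec z lo) as [Heq|Hne].
  - destruct HzT as [_ [P HP]]. exists P. rewrite Heq in HP. exact HP.
  - exfalso. set (x := Rmax lo (z - d z / 2)).
    assert (Hx : T x).
    { destruct HzT as [_ [P HP]]. assert (0 < d z) by auto. split.
      - unfold x. split; [apply Rmax_l|]. apply Rmax_lub; lra.
      - assert (lo < z) by (destruct Hz1; lra).
        exists ((x, z, z) :: P). econstructor; eauto.
        + unfold x. apply Rmax_lub_lt; lra.
        + unfold x. apply Rlt_le_trans with (z - d z / 2); [lra|apply Rmax_r].
        + lra. }
    assert (- x <= m). { apply Hub. unfold E. rewrite Ropp_involutive. auto. }
    assert (x < z). { assert (lo < z) by (destruct Hz1; lra). unfold x. apply Rmax_lub_lt; auto. assert (0 < d z) by auto. lra. }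
    assert (z = - m) by reflexivity. lra.
Qed.

Lemma cousin_gen lo hi d x z : (forall t, 0 < d t) -> lo <= x -> x <= z -> z <= hi ->
  exists P, GD lo hi d x z P.
Proof.
  intros Hd H1 H2 H3. destruct (cousin x z d Hd H2) as [P HP]. exists P. eapply GD_widen; eauto.
Qed.

Lemma MS_intro f a b I : a < b ->
  (forall eps, 0 < eps -> exists d, (forall t, 0 < d t) /\ forall P, GD a b d a b P -> Rabs (rsum f P - I) < eps) ->
  McShane_int f a b I.
Proof. intros Hab H. split; auto. intros eps He. destruct (H eps He) as [d [Hd HP]]. exists d. split; auto. intros P HP'. apply HP. apply McDiv_GD; auto. Qed.

Lemma MS_elim f a b I : McShane_int f a b I -> forall eps, 0 < eps -> exists d, (forall t, 0 < d t) /\ forall P, GD a b d a b P -> Rabs (rsum f P - I) < eps.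
Proof. intros [Hab H] eps He. destruct (H eps He) as [d [Hd HP]]. exists d. split; auto. intros P HP'. apply HP. apply GD_McDiv; auto. Qed.

Lemma MS_lt f a b I : McShane_int f a b I -> a < b.
Proof. intros [H _]; auto. Qed.

Definition dmin (d1 d2 : R -> R) := fun t => Rmin (d1 t) (d2 t).
Lemma dmin_pos d1 d2 : (forall t, 0 < d1 t) -> (forall t, 0 < d2 t) -> forall t, 0 < dmin d1 d2 t.
Proof. intros; unfold dmin; apply Rmin_glb_lt; auto. Qed.
Lemma GD_dmin_l lo hi d1 d2 x z P : GD lo hi (dmin d1 d2) x z P -> GD lo hi d1 x z P.
Proof. apply GD_gauge. intros; unfold dmin; apply Rmin_l. Qed.
Lemma GD_dmin_r lo hi d1 d2 x z P : GD lo hi (dmin d1 d2) x z P -> GD lo hi d2 x z P.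
Proof. apply GD_gauge. intros; unfold dmin; apply Rmin_r. Qed.

Lemma MS_unique f a b I1 I2 : McShane_int f a b I1 -> McShane_int f a b I2 -> I1 = I2.
Proof.
  intros H1 H2. pose proof (MS_lt _ _ _ _ H1) as Hab.
  destruct (Req_dec I1 I2) as [|Hne]; auto. exfalso.
  assert (Hlt : 0 < Rabs (I1 - I2)) by (apply Rabs_pos_lt; lra). set (e := Rabs (I1 - I2) / 2).
  destruct (MS_elim _ _ _ _ H1 e ltac:(unfold e; lra)) as [d1 [Hd1 P1]].
  destruct (MS_elim _ _ _ _ H2 e ltac:(unfold e; lra)) as [d2 [Hd2 P2]].
  destruct (cousin a b (dmin d1 d2) (dmin_pos _ _ Hd1 Hd2) ltac:(lra)) as [P HP].
  specialize (P1 P (GD_dmin_l _ _ _ _ _ _ _ HP)). specialize (P2 P (GD_dmin_r _ _ _ _ _ _ _ HP)).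
  assert (Rabs (I1 - I2) <= Rabs (rsum f P - I1) + Rabs (rsum f P - I2)).
  { replace (I1 - I2) with (-(rsum f P - I1) + (rsum f P - I2)) by ring.
    eapply Rle_trans; [apply Rabs_triang|]. rewrite Rabs_Ropp. lra. }
  unfold e in *. lra.
Qed.

End P1.

Module P2.
Import P1.
Set Bullet Behavior "Strict Subproofs".

Lemma rsum_nil f : rsum f nil = 0. Proof. reflexivity. Qed.

Lemma rsum_bound lo hi d x z P f M : GD lo hi d x z P ->
  (forall t, lo <= t <= hi -> Rabs (f t) <= M) -> Rabs (rsum f P) <= M * (z - x).
Proof.
  intros H Hf. induction H.
  - rewrite rsum_nil, Rabs_R0. replace (z - z) with 0 by ring.
    rewrite Rmult_0_r; lra.
  - rewrite rsum_cons. specialize (Hf t H0).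
    eapply Rle_trans; [apply Rabs_triang|]. rewrite Rabs_mult.
    rewrite (Rabs_right (y - x)) by lra.
    assert (Rabs (f t) * (y - x) <= M * (y - x)) by (apply Rmult_le_compat_r; lra).
    lra.
Qed.

Lemma rsum_mono lo hi d x z P f g : GD lo hi d x z P ->
  (forall t, lo <= t <= hi -> f t <= g t) -> rsum f P <= rsum g P.
Proof.
  intros H Hf. induction H; [rewrite !rsum_nil; lra|].
  rewrite !rsum_cons. specialize (Hf t H0).
  assert (f t * (y - x) <= g t * (y - x)) by (apply Rmult_le_compat_r; lra). lra.
Qed.

Lemma rsum_ext lo hi d x z P f g : GD lo hi d x z P ->
  (forall t, lo <= t <= hi -> f t = g t) -> rsum f P = rsum g P.
Proof.
  intros H Hf. induction H; [reflexivity|]. rewrite !rsum_cons, (Hf t H0), IHGD; auto.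
Qed.

Lemma rsum_plus f g P : rsum (fun x => f x + g x) P = rsum f P + rsum g P.
Proof. induction P as [|[[x y] t] P IH]; [unfold rsum; simpl; lra|]. rewrite !rsum_cons, IH. ring. Qed.

Lemma rsum_scal c f P : rsum (fun x => c * f x) P = c * rsum f P.
Proof. induction P as [|[[x y] t] P IH]; [unfold rsum; simpl; lra|]. rewrite !rsum_cons, IH. ring. Qed.

Lemma rsum_const lo hi d x z P c : GD lo hi d x z P -> rsum (fun _ => c) P = c * (z - x).
Proof. induction 1; [unfold rsum; simpl; ring|]. rewrite rsum_cons, IHGD. ring. Qed.

Lemma MS_mono f g a b I K : McShane_int f a b I -> McShane_int g a b K ->
  (forall t, a <= t <= b -> f t <= g t) -> I <= K.
Proof.
  intros H1 H2 Hfg. pose proof (MS_lt _ _ _ _ H1) as Hab.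
  destruct (Rle_or_lt I K) as [|Hlt]; auto. exfalso.
  set (e := (I - K) / 2).
  destruct (MS_elim _ _ _ _ H1 e ltac:(unfold e; lra)) as [d1 [Hd1 P1]].
  destruct (MS_elim _ _ _ _ H2 e ltac:(unfold e; lra)) as [d2 [Hd2 P2]].
  destruct (cousin a b (dmin d1 d2) (dmin_pos _ _ Hd1 Hd2) ltac:(lra)) as [P HP].
  specialize (P1 P (GD_dmin_l _ _ _ _ _ _ _ HP)). specialize (P2 P (GD_dmin_r _ _ _ _ _ _ _ HP)).
  pose proof (rsum_mono _ _ _ _ _ _ f g HP Hfg).
  apply Rabs_def2 in P1. apply Rabs_def2 in P2. unfold e in *. lra.
Qed.

Lemma MS_ext f g a b I : McShane_int f a b I -> (forall t, a <= t <= b -> f t = g t) -> McShane_int g a b I.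
Proof.
  intros H Hfg. pose proof (MS_lt _ _ _ _ H). apply MS_intro; auto. intros e He.
  destruct (MS_elim _ _ _ _ H e He) as [d [Hd HP]]. exists d; split; auto.
  intros P HP'. rewrite <- (rsum_ext _ _ _ _ _ _ f g HP' Hfg). auto.
Qed.

Lemma MS_plus f g a b I K : McShane_int f a b I -> McShane_int g a b K ->
  McShane_int (fun x => f x + g x) a b (I + K).
Proof.
  intros H1 H2. pose proof (MS_lt _ _ _ _ H1). apply MS_intro; auto. intros e He.
  destruct (MS_elim _ _ _ _ H1 (e/2) ltac:(lra)) as [d1 [Hd1 P1]].
  destruct (MS_elim _ _ _ _ H2 (e/2) ltac:(lra)) as [d2 [Hd2 P2]].
  exists (dmin d1 d2). split; [apply dmin_pos; auto|]. intros P HP.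
  specialize (P1 P (GD_dmin_l _ _ _ _ _ _ _ HP)). specialize (P2 P (GD_dmin_r _ _ _ _ _ _ _ HP)).
  rewrite rsum_plus. apply Rabs_def2 in P1. apply Rabs_def2 in P2. apply Rabs_def1; lra.
Qed.

Lemma MS_scal c f a b I : McShane_int f a b I -> McShane_int (fun x => c * f x) a b (c * I).
Proof.
  intros H1. pose proof (MS_lt _ _ _ _ H1). apply MS_intro; auto. intros e He.
  destruct (MS_elim _ _ _ _ H1 (e / (Rabs c + 1))) as [d1 [Hd1 P1]].
  { apply Rdiv_lt_0_compat; auto. pose proof (Rabs_pos c); lra. }
  exists d1. split; auto. intros P HP. rewrite rsum_scal.
  replace (c * rsum f P - c * I) with (c * (rsum f P - I)) by ring. rewrite Rabs_mult.
  specialize (P1 P HP). pose proof (Rabs_pos c). pose proof (Rabs_pos (rsum f P - I)).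
  apply Rle_lt_trans with ((Rabs c + 1) * Rabs (rsum f P - I)). { nra. }
  apply Rmult_lt_compat_l with (r := Rabs c + 1) in P1; [|lra].
  replace ((Rabs c + 1) * (e / (Rabs c + 1))) with e in P1 by (field; lra). lra.
Qed.

Lemma MS_const c a b : a < b -> McShane_int (fun _ => c) a b (c * (b - a)).
Proof.
  intros Hab. apply MS_intro; auto. intros e He. exists (fun _ => 1). split; [intros; lra|].
  intros P HP. rewrite (rsum_const _ _ _ _ _ _ c HP). rewrite Rminus_diag, Rabs_R0. auto.
Qed.

Lemma MS_ge0 f a b I : McShane_int f a b I -> (forall t, a <= t <= b -> 0 <= f t) -> 0 <= I.
Proof.
  intros H Hf. pose proof (MS_lt _ _ _ _ H). pose proof (MS_const 0 a b H0).
  replace 0 with (0 * (b - a)) by ring. eapply MS_mono; eauto.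
Qed.

Fixpoint dmins (ds : nat -> R -> R) (n : nat) : R -> R :=
  match n with O => ds O | S n' => dmin (dmins ds n') (ds n) end.

Lemma dmins_pos ds : (forall n t, 0 < ds n t) -> forall n t, 0 < dmins ds n t.
Proof. intros H n; induction n; simpl; intros; auto. apply dmin_pos; auto. Qed.

Lemma dmins_le ds : forall n m t, (n <= m)%nat -> dmins ds m t <= ds n t.
Proof.
  intros n m t Hnm. induction Hnm.
  - destruct n; simpl; [lra|]. unfold dmin; apply Rmin_r.
  - simpl. unfold dmin. eapply Rle_trans; [apply Rmin_l|auto].
Qed.

Lemma MS_cauchy f a b : a < b ->
  (forall eps, 0 < eps -> exists d, (forall t, 0 < d t) /\
     forall P Q, GD a b d a b P -> GD a b d a b Q -> Rabs (rsum f P - rsum f Q) < eps) ->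
  exists I, McShane_int f a b I.
Proof.
  intros Hab Hc.
  assert (Hc' : forall n : nat, exists d, (forall t, 0 < d t) /\
     forall P Q, GD a b d a b P -> GD a b d a b Q -> Rabs (rsum f P - rsum f Q) < / INR (S n)).
  { intros n. apply Hc. apply Rinv_0_lt_compat. apply lt_0_INR. lia. }
  destruct (functional_choice _ Hc') as [ds Hds].
  assert (Hpos : forall n t, 0 < ds n t) by (intros n; destruct (Hds n); auto).
  assert (HP : forall n, exists P, GD a b (dmins ds n) a b P).
  { intros n. apply cousin; [apply dmins_pos; auto|lra]. }
  destruct (functional_choice _ HP) as [Ps HPs].
  set (s := fun n => rsum f (Ps n)).
  assert (Hfine : forall n m, (n <= m)%nat -> GD a b (ds n) a b (Ps m)).
  { intros n m Hnm. eapply GD_gauge; [|apply HPs]. intros; apply dmins_le; auto. }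
  assert (Hcs : forall n m, (n <= m)%nat -> Rabs (s m - s n) < / INR (S n)).
  { intros n m Hnm. destruct (Hds n) as [_ Hq]. apply Hq; apply Hfine; auto. }
  assert (Hcc : Cauchy_crit s).
  { intros e He. destruct (archimed_cor1 (e/2) ltac:(lra)) as [N [HN1 HN2]].
    exists N. intros n m Hn Hm. unfold R_dist.
    assert (Hinv : / INR (S N) < e/2).
    { eapply Rle_lt_trans; [|apply HN1]. apply Rinv_le_contravar. apply lt_0_INR; lia. apply le_INR; lia. }
    assert (A1 : Rabs (s m - s N) < / INR (S N)) by (apply Hcs; lia).
    assert (A2 : Rabs (s n - s N) < / INR (S N)) by (apply Hcs; lia).
    apply Rabs_def2 in A1. apply Rabs_def2 in A2. apply Rabs_def1; lra. }
  destruct (R_complete s Hcc) as [I HI]. exists I.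
  apply MS_intro; auto. intros e He.
  destruct (archimed_cor1 (e/2) ltac:(lra)) as [N [HN1 HN2]].
  assert (Hinv : / INR (S N) < e / 2).
  { eapply Rle_lt_trans; [|apply HN1]. apply Rinv_le_contravar. apply lt_0_INR; lia. apply le_INR; lia. }
  exists (ds N). split; auto. intros P HP'.
  destruct (HI (e/2) ltac:(lra)) as [M HM].
  set (m := Nat.max N M). specialize (HM m ltac:(unfold m; lia)). unfold R_dist in HM.
  destruct (Hds N) as [_ Hq]. specialize (Hq P (Ps m) HP' (Hfine N m ltac:(unfold m; lia))).
  fold (s m) in Hq. apply Rabs_def2 in Hq. apply Rabs_def2 in HM. apply Rabs_def1; lra.
Qed.

Lemma MS_sub f a b I c d : McShane_int f a b I -> a <= c -> c < d -> d <= b ->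
  exists J, McShane_int f c d J.
Proof.
  intros H Hac Hcd Hdb. apply MS_cauchy; auto. intros e He.
  destruct (MS_elim _ _ _ _ H (e/2) ltac:(lra)) as [dl [Hdl HP]].
  exists dl. split; auto. intros P Q HPf HQf.
  destruct (cousin_gen a b dl a c Hdl ltac:(lra) ltac:(lra) ltac:(lra)) as [D1 HD1].
  destruct (cousin_gen a b dl d b Hdl ltac:(lra) ltac:(lra) ltac:(lra)) as [D3 HD3].
  assert (G : forall R, GD c d dl c d R -> GD a b dl a b (D1 ++ R ++ D3)).
  { intros R HR. eapply GD_app; eauto. eapply GD_app; eauto. eapply GD_widen; [| |eauto]; lra. }
  pose proof (HP _ (G P HPf)) as A1. pose proof (HP _ (G Q HQf)) as A2.
  rewrite !rsum_app in A1, A2. apply Rabs_def2 in A1. apply Rabs_def2 in A2. apply Rabs_def1; lra.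
Qed.

Definition cgauge (c : R) (d1 d2 : R -> R) : R -> R := fun t =>
  if Rlt_dec t c then Rmin (d1 t) (c - t)
  else if Rlt_dec c t then Rmin (d2 t) (t - c) else Rmin (d1 t) (d2 t).

Lemma cgauge_pos c d1 d2 : (forall t, 0 < d1 t) -> (forall t, 0 < d2 t) -> forall t, 0 < cgauge c d1 d2 t.
Proof.
  intros H1 H2 t. unfold cgauge. destruct (Rlt_dec t c); [apply Rmin_glb_lt; auto; lra|].
  destruct (Rlt_dec c t); apply Rmin_glb_lt; auto; lra.
Qed.

Lemma split_right a b c d1 d2 x z P : GD a b (cgauge c d1 d2) x z P -> c <= x -> GD c b d2 x z P.
Proof.
  intros H. induction H; intros Hx; [constructor|].
  assert (Ht : c <= t).
  { destruct (Rlt_le_dec t c) as [Hl|]; auto. unfold cgauge in H2. destruct (Rlt_dec t c); [|contradiction].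
    pose proof (Rmin_r (d1 t) (c - t)). lra. }
  econstructor; eauto; try lra.
  - unfold cgauge in H1. destruct (Rlt_dec t c); [lra|]. destruct (Rlt_dec c t).
    + pose proof (Rmin_l (d2 t) (t - c)). lra.
    + pose proof (Rmin_r (d1 t) (d2 t)). lra.
  - unfold cgauge in H2. destruct (Rlt_dec t c); [lra|]. destruct (Rlt_dec c t).
    + pose proof (Rmin_l (d2 t) (t - c)). lra.
    + pose proof (Rmin_r (d1 t) (d2 t)). lra.
  - apply IHGD. lra.
Qed.

Lemma split_div f a b c d1 d2 x z P : a <= c -> c <= b -> GD a b (cgauge c d1 d2) x z P -> x <= c -> c <= z ->
  exists P1 P2, GD a c d1 x c P1 /\ GD c b d2 c z P2 /\ rsum f P = rsum f P1 + rsum f P2.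
Proof.
  intros Hac Hcb H. induction H; intros Hx Hcz.
  - exists nil, nil. assert (z = c) by lra. subst. split; [constructor|split; [constructor|]]. rewrite rsum_nil; ring.
  - destruct (Rle_lt_dec y c) as [Hyc|Hyc].
    + assert (Ht : t <= c).
      { destruct (Rle_lt_dec t c) as [|Hl]; auto. unfold cgauge in H1.
        destruct (Rlt_dec t c); [lra|]. destruct (Rlt_dec c t); [|lra].
        pose proof (Rmin_r (d2 t) (t - c)). lra. }
      destruct (IHGD Hyc Hcz) as [P1 [P2 [HP1 [HP2 Hs]]]].
      exists ((x,y,t)::P1), P2. split; [|split; auto].
      * econstructor; eauto; try lra.
        -- unfold cgauge in H1. destruct (Rlt_dec t c). pose proof (Rmin_l (d1 t) (c - t)); lra.
           destruct (Rlt_dec c t); [lra|]. pose proof (Rmin_l (d1 t) (d2 t)); lra.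
        -- unfold cgauge in H2. destruct (Rlt_dec t c). pose proof (Rmin_l (d1 t) (c - t)); lra.
           destruct (Rlt_dec c t); [lra|]. pose proof (Rmin_l (d1 t) (d2 t)); lra.
      * rewrite !rsum_cons, Hs. ring.
    + destruct (Req_dec x c) as [Exc|Nxc].
      * subst x. exists nil, ((c,y,t)::P). split; [constructor|split].
        -- apply split_right with a d1; [econstructor; eauto|lra].
        -- rewrite rsum_nil. ring.
      * assert (Ht : t = c).
        { unfold cgauge in H1, H2. destruct (Rlt_dec t c).
          - pose proof (Rmin_r (d1 t) (c - t)). lra.
          - destruct (Rlt_dec c t). pose proof (Rmin_r (d2 t) (t - c)). lra. lra. }
        subst t. unfold cgauge in H1, H2. destruct (Rlt_dec c c); [lra|]. destruct (Rlt_dec c c); [lra|].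
        pose proof (Rmin_l (d1 c) (d2 c)). pose proof (Rmin_r (d1 c) (d2 c)).
        exists ((x,c,c)::nil), ((c,y,c)::P). split; [|split].
        -- econstructor; try lra. constructor.
        -- econstructor; try lra. apply split_right with a d1; auto. lra.
        -- rewrite !rsum_cons, rsum_nil. ring.
Qed.

Lemma MS_conc f a c b I1 I2 : McShane_int f a c I1 -> McShane_int f c b I2 -> McShane_int f a b (I1 + I2).
Proof.
  intros H1 H2. pose proof (MS_lt _ _ _ _ H1). pose proof (MS_lt _ _ _ _ H2).
  apply MS_intro; [lra|]. intros e He.
  destruct (MS_elim _ _ _ _ H1 (e/2) ltac:(lra)) as [d1 [Hd1 P1]].
  destruct (MS_elim _ _ _ _ H2 (e/2) ltac:(lra)) as [d2 [Hd2 P2]].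
  exists (cgauge c d1 d2). split; [apply cgauge_pos; auto|]. intros P HP.
  destruct (split_div f a b c d1 d2 a b P ltac:(lra) ltac:(lra) HP ltac:(lra) ltac:(lra)) as [Q1 [Q2 [HQ1 [HQ2 Hs]]]].
  specialize (P1 Q1 HQ1). specialize (P2 Q2 HQ2). rewrite Hs.
  apply Rabs_def2 in P1. apply Rabs_def2 in P2. apply Rabs_def1; lra.
Qed.

Lemma MS_split f a c b I : McShane_int f a b I -> a < c -> c < b ->
  exists I1 I2, McShane_int f a c I1 /\ McShane_int f c b I2 /\ I = I1 + I2.
Proof.
  intros H Hac Hcb. destruct (MS_sub _ _ _ _ a c H) as [I1 H1]; try lra.
  destruct (MS_sub _ _ _ _ c b H) as [I2 H2]; try lra.
  exists I1, I2. split; auto. split; auto. eapply MS_unique; [exact H|]. apply (MS_conc f a c b); auto.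
Qed.

Lemma MS_diff f a x y Ix Iy : McShane_int f a x Ix -> McShane_int f a y Iy -> x < y ->
  McShane_int f x y (Iy - Ix).
Proof.
  intros Hx Hy Hxy. pose proof (MS_lt _ _ _ _ Hx).
  destruct (MS_split _ _ x _ _ Hy) as [I1 [I2 [A1 [A2 E]]]]; auto.
  rewrite (MS_unique _ _ _ _ _ Hx A1). replace (Iy - I1) with I2 by lra. auto.
Qed.

End P2.

Module P3.
Import P1 P2.
Import Coquelicot.Coquelicot.
Set Bullet Behavior "Strict Subproofs".

Fixpoint lz (z : R) (P : list (R * R * R)) : R :=
  match P with
  | nil => 0
  | (x, y, t) :: P' => (if Req_dec_T t z then y - x else 0) + lz z P'
  end.

Lemma rsum_lz lo hi d x w P f h z : GD lo hi d x w P ->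
  (forall t, lo <= t <= hi -> t <> z -> f t = h t) ->
  rsum f P - rsum h P = (f z - h z) * lz z P.
Proof.
  intros H Hf. induction H; [unfold rsum; simpl; ring|].
  rewrite !rsum_cons. simpl. destruct (Req_dec_T t z) as [E|E].
  - subst. rewrite Rmult_plus_distr_l, <- IHGD. ring.
  - rewrite (Hf t H0 E). rewrite Rplus_0_l, <- IHGD. ring.
Qed.

Lemma lz_bound lo hi d x w P z eta : GD lo hi d x w P -> d z <= eta ->
  lz z P <= Rmax 0 (z + eta - Rmax x (z - eta)).
Proof.
  intros H He. induction H; simpl.
  - unfold Rmax; repeat destruct Rle_dec; lra.
  - destruct (Req_dec_T t z) as [E|E].
    + subst. revert IHGD. unfold Rmax; repeat destruct Rle_dec; lra.
    + revert IHGD. unfold Rmax; repeat destruct Rle_dec; lra.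
Qed.

Lemma MS_point f h lo hi z I : McShane_int h lo hi I ->
  (forall t, lo <= t <= hi -> t <> z -> f t = h t) -> McShane_int f lo hi I.
Proof.
  intros H Hfh. pose proof (MS_lt _ _ _ _ H). apply MS_intro; auto. intros e He.
  destruct (MS_elim _ _ _ _ H (e/2) ltac:(lra)) as [d [Hd HP]].
  set (eta := e / (4 * (Rabs (f z - h z) + 1))).
  assert (Heta : 0 < eta). { unfold eta. apply Rdiv_lt_0_compat; [lra|]. pose proof (Rabs_pos (f z - h z)). lra. }
  exists (fun t => if Req_dec_T t z then Rmin (d t) eta else d t). split.
  { intros t. destruct (Req_dec_T t z); auto. apply Rmin_glb_lt; auto. }
  intros P HPf.
  assert (HP1 : GD lo hi d lo hi P).
  { eapply GD_gauge; [|exact HPf]. intros t _. cbv beta. destruct (Req_dec_T t z); [apply Rmin_l|lra]. }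
  specialize (HP P HP1). pose proof (rsum_lz _ _ _ _ _ _ f h z HPf Hfh) as E.
  pose proof (lz_bound _ _ _ _ _ _ z eta HPf) as L.
  assert (L' : lz z P <= 2 * eta).
  { eapply Rle_trans; [apply L|]. { destruct (Req_dec_T z z) as [_|]; [apply Rmin_r|congruence]. }
    unfold Rmax; repeat destruct Rle_dec; lra. }
  assert (L0 : 0 <= lz z P).
  { clear -HPf. induction HPf; simpl; [lra|]. destruct (Req_dec_T t z); lra. }
  assert (Hb : Rabs ((f z - h z) * lz z P) <= e / 2).
  { rewrite Rabs_mult, (Rabs_right (lz z P)) by lra.
    apply Rle_trans with (Rabs (f z - h z) * (2 * eta)). { apply Rmult_le_compat_l; auto. apply Rabs_pos. }
    unfold eta. pose proof (Rabs_pos (f z - h z)).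
    apply Rle_trans with ((Rabs (f z - h z) + 1) * (2 * (e / (4 * (Rabs (f z - h z) + 1))))).
    { apply Rmult_le_compat_r; [|lra]. apply Rmult_le_pos; [lra|]. apply Rlt_le. apply Rdiv_lt_0_compat; lra. }
    right. field. lra. }
  replace (rsum f P - I) with ((rsum f P - rsum h P) + (rsum h P - I)) by ring.
  rewrite E. eapply Rle_lt_trans; [apply Rabs_triang|]. lra.
Qed.

Lemma cont_coq f x : continuity_pt f x -> continuous f x.
Proof. intros H. apply continuity_pt_filterlim. auto. Qed.

Lemma exRInt_sub f lo hi x y : (forall s, lo <= s <= hi -> continuity_pt f s) -> lo <= x -> x <= y -> y <= hi -> ex_RInt f x y.
Proof. intros Hc H1 H2 H3. apply (@ex_RInt_continuous R_CompleteNormedModule). intros s Hs. apply cont_coq. apply Hc.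
  rewrite Rmin_left in Hs by lra. rewrite Rmax_right in Hs by lra. lra. Qed.

Lemma piece_bound (f : R -> R) x y t e : x <= y -> ex_RInt f x y ->
  (forall s, x <= s <= y -> Rabs (f s - f t) <= e) ->
  Rabs (f t * (y - x) - RInt f x y) <= e * (y - x).
Proof.
  intros Hxy Ex Hb.
  assert (E1 : RInt f x y <= RInt (fun _ => f t + e) x y).
  { apply RInt_le; auto. apply ex_RInt_const. intros s Hs. specialize (Hb s ltac:(lra)). apply Rabs_le_between in Hb. lra. }
  assert (E2 : RInt (fun _ => f t - e) x y <= RInt f x y).
  { apply RInt_le; auto. apply ex_RInt_const. intros s Hs. specialize (Hb s ltac:(lra)). apply Rabs_le_between in Hb. lra. }
  rewrite !RInt_const in E1, E2. unfold scal in E1, E2; simpl in E1, E2. unfold mult in E1, E2; simpl in E1, E2.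
  apply Rabs_le_between. split; nra.
Qed.

Lemma MS_RInt f lo hi : lo < hi -> (forall x, lo <= x <= hi -> continuity_pt f x) ->
  McShane_int f lo hi (RInt f lo hi).
Proof.
  intros Hlh Hc. apply MS_intro; auto. intros e He.
  assert (HU := Heine f (fun c => lo <= c <= hi) (compact_P3 lo hi) Hc).
  set (e' := e / (2 * (hi - lo))).
  assert (He' : 0 < e') by (unfold e'; apply Rdiv_lt_0_compat; lra).
  destruct (HU (mkposreal e' He')) as [[eta Heta] Hu]. simpl in Hu.
  exists (fun _ => eta). split; [intros; auto|]. intros P HP.
  assert (G : forall x w Q, GD lo hi (fun _ => eta) x w Q -> lo <= x -> w <= hi ->
            Rabs (rsum f Q - RInt f x w) <= e' * (w - x)).
  { intros x w Q HQ. induction HQ as [?|x y z t Q0 H H0 H1 H2 HQ IHHQ]; intros Hx Hw.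
    - rewrite rsum_nil, RInt_point. rewrite Rminus_0_r, Rabs_R0. lra.
    - pose proof (GD_le _ _ _ _ _ _ HQ) as Hyz.
      assert (Ex1 : ex_RInt f x y) by (eapply exRInt_sub; eauto; lra).
      assert (Ex2 : ex_RInt f y z) by (eapply exRInt_sub; eauto; lra).
      assert (Ch : RInt f x z = RInt f x y + RInt f y z).
      { rewrite <- (RInt_Chasles f x y z Ex1 Ex2). reflexivity. }
      rewrite rsum_cons, Ch.
      specialize (IHHQ ltac:(lra) Hw).
      assert (Hpiece : Rabs (f t * (y - x) - RInt f x y) <= e' * (y - x)).
      { apply piece_bound; auto; [lra|]. intros s Hs. left. apply Hu; try lra. apply Rabs_def1; lra. }
      replace (f t * (y - x) + rsum f Q0 - (RInt f x y + RInt f y z))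
        with ((f t * (y - x) - RInt f x y) + (rsum f Q0 - RInt f y z)) by ring.
      assert (e' * (y - x) + e' * (z - y) = e' * (z - x)) by ring.
      eapply Rle_trans; [apply Rabs_triang|]. lra. }
  specialize (G lo hi P HP ltac:(lra) ltac:(lra)).
  eapply Rle_lt_trans; [apply G|]. unfold e'. replace (e / (2 * (hi - lo)) * (hi - lo)) with (e / 2) by (field; lra). lra.
Qed.

Lemma rsum_minus f g P : rsum (fun x => f x - g x) P = rsum f P - rsum g P.
Proof. induction P as [|[[x y] t] P IH]; [unfold rsum; simpl; lra|]. rewrite !rsum_cons, IH. ring. Qed.

Lemma MS_unif f a b : a < b ->
  (forall eps, 0 < eps -> exists phi I, McShane_int phi a b I /\ forall t, a <= t <= b -> Rabs (f t - phi t) <= eps) ->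
  exists I, McShane_int f a b I.
Proof.
  intros Hab H. apply MS_cauchy; auto. intros e He.
  destruct (H (e / (4 * (b - a)))) as [phi [I [HI Hphi]]]. { apply Rdiv_lt_0_compat; lra. }
  destruct (MS_elim _ _ _ _ HI (e/4) ltac:(lra)) as [d [Hd HP]].
  exists d. split; auto. intros P Q HPf HQf.
  pose proof (rsum_bound _ _ _ _ _ _ (fun x => f x - phi x) _ HPf Hphi) as B1.
  pose proof (rsum_bound _ _ _ _ _ _ (fun x => f x - phi x) _ HQf Hphi) as B2.
  rewrite rsum_minus in B1, B2.
  replace (e / (4 * (b - a)) * (b - a)) with (e / 4) in B1, B2 by (field; lra).
  pose proof (HP P HPf) as C1. pose proof (HP Q HQf) as C2.
  apply Rabs_def2 in C1. apply Rabs_def2 in C2. apply Rabs_le_between in B1. apply Rabs_le_between in B2.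
  apply Rabs_def1; lra.
Qed.

End P3.

Module P4.
Import P1 P2 P3.
Set Bullet Behavior "Strict Subproofs".

Fixpoint st (h : R -> R) (g : nat -> R) (n : nat) (x : R) : R :=
  match n with
  | O => h (g O)
  | S j => if Rle_dec (g (S j)) x then h (g (S j)) else st h g j x
  end.

Lemma st_spec h g n x : g O <= x ->
  exists k, (k <= n)%nat /\ st h g n x = h (g k) /\ g k <= x /\ (x < g (S k) \/ k = n).
Proof.
  intros H0. induction n.
  - exists O. simpl. split; [lia|]. split; [reflexivity|]. split; auto.
  - simpl. destruct (Rle_dec (g (S n)) x) as [Hl|Hl].
    + exists (S n). split; [lia|]. split; auto.
    + destruct IHn as [k [Hk [E [Hx Hor]]]]. exists k. split; [lia|]. split; auto. split; auto.
      left. destruct Hor as [Hor|Hor]; auto. subst k. lra.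
Qed.

Lemma MS_prod f h c d I M : McShane_int f c d I -> (forall t, c <= t <= d -> Rabs (f t) <= M) ->
  (forall t, c <= t <= d -> continuity_pt h t) -> exists K, McShane_int (fun x => f x * h x) c d K.
Proof.
  intros Hf HM Hh. pose proof (MS_lt _ _ _ _ Hf) as Hcd.
  assert (HM0 : 0 <= M) by (specialize (HM c ltac:(lra)); pose proof (Rabs_pos (f c)); lra).
  apply MS_unif; auto. intros e He.
  assert (HU := Heine h (fun x => c <= x <= d) (compact_P3 c d) Hh).
  destruct (HU (mkposreal (e / (M + 1)) ltac:(apply Rdiv_lt_0_compat; lra))) as [[eta Heta] Hu]. simpl in Hu.
  destruct (archimed_cor1 (eta / (d - c)) ltac:(apply Rdiv_lt_0_compat; lra)) as [N [HN1 HN2]].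
  assert (HNpos : 0 < INR N) by (apply lt_0_INR; lia).
  set (w := (d - c) / INR N).
  assert (Hw : 0 < w) by (unfold w; apply Rdiv_lt_0_compat; lra).
  assert (Hweta : w < eta).
  { unfold w. unfold Rdiv. apply Rmult_lt_reg_r with (/ (d - c)). apply Rinv_0_lt_compat; lra.
    replace ((d - c) * / INR N * / (d - c)) with (/ INR N) by (field; lra). auto. }
  set (g := fun i : nat => c + INR i * w).
  assert (gN : g N = d) by (unfold g, w; field; lra).
  assert (g0 : g O = c) by (unfold g; simpl; ring).
  assert (gS : forall i, g (S i) = g i + w) by (intros i; unfold g; rewrite S_INR; ring).
  assert (gmono : forall i j, (i <= j)%nat -> g i <= g j).
  { intros i j Hij. unfold g. apply le_INR in Hij. nra. }
  assert (grange : forall i, (i <= N)%nat -> c <= g i <= d).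
  { intros i Hi. split; [rewrite <- g0; apply gmono; lia| rewrite <- gN; apply gmono; auto]. }
  set (phi := fun x => f x * st h g N x).
  exists phi.
  assert (Hst : forall i t, (i < N)%nat -> g i <= t < g (S i) -> st h g N t = h (g i)).
  { intros i t Hi Ht. destruct (st_spec h g N t) as [k [Hk [E [Hkt Hor]]]]. { rewrite g0. pose proof (gmono O i ltac:(lia)). lra. }
    rewrite E. f_equal. f_equal.
    destruct (Nat.lt_trichotomy k i) as [Hlt|[Heq|Hgt]]; auto.
    - exfalso. pose proof (gmono (S k) i Hlt). destruct Hor as [Hor|Hor]; [lra|lia].
    - exfalso. pose proof (gmono (S i) k Hgt). lra. }
  assert (Hpiece : forall i, (i < N)%nat -> exists K, McShane_int phi (g i) (g (S i)) K).
  { intros i Hi. pose proof (grange i ltac:(lia)). pose proof (grange (S i) ltac:(lia)).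
    destruct (MS_sub f c d I (g i) (g (S i)) Hf) as [J HJ]; try lra. rewrite gS; lra.
    exists (h (g i) * J). apply MS_point with (h := fun x => h (g i) * f x) (z := g (S i)).
    - apply MS_scal; auto.
    - intros t Ht Hne. unfold phi. rewrite (Hst i t Hi ltac:(lra)). ring. }
  assert (Hglue : forall i, (S i <= N)%nat -> exists K, McShane_int phi c (g (S i)) K).
  { induction i; intros Hi.
    - rewrite <- g0. apply Hpiece; lia.
    - destruct (IHi ltac:(lia)) as [K1 HK1]. destruct (Hpiece (S i) ltac:(lia)) as [K2 HK2].
      exists (K1 + K2). eapply MS_conc; eauto. }
  destruct N as [|N']; [lia|].
  destruct (Hglue N' ltac:(lia)) as [K HK]. rewrite gN in HK. exists K. split; auto.
  intros t Ht. unfold phi.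
  destruct (st_spec h g (S N') t) as [k [Hk [E [Hkt Hor]]]]. { lra. }
  rewrite E. replace (f t * h t - f t * h (g k)) with (f t * (h t - h (g k))) by ring.
  rewrite Rabs_mult. pose proof (grange k Hk).
  assert (Hd : Rabs (h t - h (g k)) < e / (M + 1)).
  { apply Hu; try lra. destruct Hor as [Hor|Hor].
    - rewrite gS in Hor. apply Rabs_def1; lra.
    - subst k. rewrite gN in Hkt. replace (t - g (S N')) with 0 by (rewrite gN; lra). rewrite Rabs_R0; lra. }
  specialize (HM t Ht). pose proof (Rabs_pos (h t - h (g k))). pose proof (Rabs_pos (f t)).
  apply Rle_trans with (M * (e / (M + 1))). { apply Rmult_le_compat; lra. }
  apply Rle_trans with ((M + 1) * (e / (M + 1))). { apply Rmult_le_compat_r; [apply Rlt_le, Rdiv_lt_0_compat|]; lra. }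
  right; field; lra.
Qed.

End P4.

Module P5.
Import P1 P2 P3 P4.
Set Bullet Behavior "Strict Subproofs".

Lemma Rpower_pos x e : 0 < Rpower x e.
Proof. unfold Rpower. apply exp_pos. Qed.

Lemma pw_0 e : pw 0 e = 0.
Proof. unfold pw. destruct (Rle_dec 0 0); [auto|lra]. Qed.

Lemma pw_le0 x e : x <= 0 -> pw x e = 0.
Proof. unfold pw. destruct (Rle_dec x 0); [auto|lra]. Qed.

Lemma pw_pos x e : 0 < x -> pw x e = Rpower x e.
Proof. unfold pw. destruct (Rle_dec x 0); [lra|auto]. Qed.

Lemma pw_nonneg x e : 0 <= pw x e.
Proof. unfold pw. destruct (Rle_dec x 0); [lra|]. apply Rlt_le, Rpower_pos. Qed.

Lemma pw_mul x p : 0 < x -> pw x (p - 1) * x = pw x p.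
Proof.
  intros H. rewrite !pw_pos by auto. rewrite <- (Rpower_1 x) at 2 by auto.
  rewrite <- Rpower_plus. f_equal. ring.
Qed.

Lemma phip_mul p x : phip p x * x = pw (Rabs x) p.
Proof.
  unfold phip. destruct (Rlt_dec x 0) as [H|H].
  - rewrite Rabs_left by auto. rewrite <- (pw_mul (- x) p) by lra. ring.
  - destruct (Req_dec x 0) as [->|Hne].
    + rewrite Rabs_R0, !pw_0. ring.
    + rewrite Rabs_right by lra. apply pw_mul. lra.
Qed.

Lemma Rpower_cont x e : 0 < x -> continuity_pt (fun y => Rpower y e) x.
Proof.
  intros H. apply derivable_continuous_pt. exists (e * Rpower x (e - 1)). apply derivable_pt_lim_power; auto.
Qed.

Lemma cont_ext F G z r : continuity_pt F z -> 0 < r -> (forall w, Rabs (w - z) < r -> G w = F w) ->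
  continuity_pt G z.
Proof.
  intros HF Hr HE e He. destruct (HF e He) as [a [Ha Hx]]. exists (Rmin a r). split; [apply Rmin_glb_lt; auto|].
  intros x [Dx Hd]. simpl in *. unfold R_dist in *.
  assert (Hz : Rabs (z - z) < r) by (rewrite Rminus_diag, Rabs_R0; auto).
  rewrite (HE x), (HE z); auto. 2: pose proof (Rmin_r a r); lra.
  apply Hx. split; auto. simpl; unfold R_dist. pose proof (Rmin_l a r); lra.
Qed.

Lemma pw_abs_cont p y : 0 < p -> continuity_pt (fun y => pw (Rabs y) p) y.
Proof.
  intros Hp. destruct (Req_dec y 0) as [->|Hne].
  - intros e He. exists (Rpower e (/ p)). split; [apply Rpower_pos|].
    intros x [_ Hx]. simpl in *. unfold R_dist in *. rewrite Rabs_R0, pw_0, Rminus_0_r.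
    rewrite Rminus_0_r in Hx. rewrite Rabs_right by apply Rle_ge, pw_nonneg.
    destruct (Req_dec x 0) as [->|Hx0]. { rewrite Rabs_R0, pw_0. auto. }
    rewrite pw_pos by (apply Rabs_pos_lt; auto).
    apply Rlt_le_trans with (Rpower (Rpower e (/ p)) p).
    + apply Rlt_Rpower_l; auto. split; [apply Rabs_pos_lt|]; auto.
    + rewrite Rpower_mult. replace (/ p * p) with 1 by (field; lra). rewrite Rpower_1; lra.
  - assert (Ha : 0 < Rabs y) by (apply Rabs_pos_lt; auto).
    apply cont_ext with (F := fun x => Rpower (Rabs x) p) (r := Rabs y); auto.
    + apply continuity_pt_comp with (f1 := Rabs) (f2 := fun u => Rpower u p).
      * apply Rcontinuity_abs.
      * apply Rpower_cont; auto.
    + intros w Hw. apply pw_pos. apply Rabs_def2 in Hw. apply Rabs_pos_lt.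
      destruct (Rle_or_lt 0 y); [rewrite Rabs_right in Hw|rewrite Rabs_left in Hw]; lra.
Qed.

End P5.

Module P6.
Import P1 P2 P3 P4 P5.
Set Bullet Behavior "Strict Subproofs".

Lemma Rabs_le_b x y : Rabs x <= y -> - y <= x <= y.
Proof. unfold Rabs; destruct Rcase_abs; lra. Qed.

Section Indef.
Variables (a b : R) (u g : R -> R).
Hypothesis Hab : a < b.
Hypothesis Hu : forall x, a < x <= b -> McShane_int g a x (u x).
Hypothesis Hua : u a = 0.

Lemma indef_int y z : a <= y -> y < z -> z <= b -> McShane_int g y z (u z - u y).
Proof.
  intros H1 H2 H3. destruct (Req_dec y a) as [->|Hne].
  - rewrite Hua, Rminus_0_r. apply Hu; lra.
  - apply MS_diff with a; auto; apply Hu; lra.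
Qed.

Lemma approx_div y z d e : a <= y -> y <= z -> z <= b -> (forall t, 0 < d t) -> 0 < e ->
  exists D, GD a b d y z D /\ Rabs (rsum g D - (u z - u y)) < e.
Proof.
  intros H1 H2 H3 Hd He. destruct (Req_dec y z) as [<-|Hne].
  - exists nil. split; [constructor|]. rewrite rsum_nil, Rminus_diag, Rminus_0_r, Rabs_R0. auto.
  - assert (HI := indef_int y z H1 ltac:(lra) H3).
    destruct (MS_elim _ _ _ _ HI e He) as [d1 [Hd1 HP]].
    destruct (cousin y z (dmin d d1) (dmin_pos _ _ Hd Hd1) ltac:(lra)) as [D HD].
    exists D. split.
    + eapply GD_widen; [| |eapply GD_dmin_l; eauto]; lra.
    + apply HP. eapply GD_dmin_r; eauto.
Qed.

Lemma indef_cont x0 e : a <= x0 <= b -> 0 < e -> exists eta, 0 < eta /\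
  forall x, a <= x <= b -> Rabs (x - x0) < eta -> Rabs (u x - u x0) < e.
Proof.
  intros Hx0 He. assert (Hb := Hu b ltac:(lra)).
  destruct (MS_elim _ _ _ _ Hb (e/4) ltac:(lra)) as [d [Hd HP]].
  set (eta := Rmin (d x0) (e / (4 * (Rabs (g x0) + 1)))).
  assert (Hga : 0 <= Rabs (g x0)) by apply Rabs_pos.
  assert (Heta : 0 < eta). { apply Rmin_glb_lt; auto. apply Rdiv_lt_0_compat; lra. }
  exists eta. split; auto. intros x Hx Hxx.
  assert (Hpiece : Rabs (g x0) * Rabs (x - x0) <= e / 4).
  { apply Rle_trans with (Rabs (g x0) * (e / (4 * (Rabs (g x0) + 1)))).
    - apply Rmult_le_compat_l; auto. pose proof (Rmin_r (d x0) (e / (4 * (Rabs (g x0) + 1)))). fold eta in H. lra.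
    - apply Rle_trans with ((Rabs (g x0) + 1) * (e / (4 * (Rabs (g x0) + 1)))).
      + apply Rmult_le_compat_r; [apply Rlt_le, Rdiv_lt_0_compat|]; lra.
      + right. field. lra. }
  assert (Hdx : Rabs (x - x0) < d x0). { pose proof (Rmin_l (d x0) (e / (4 * (Rabs (g x0) + 1)))). fold eta in H. lra. }
  destruct (Rtotal_order x x0) as [Hlt|[Heq|Hgt]].
  - destruct (approx_div a x d (e/4)) as [D1 [HD1 E1]]; try lra; auto.
    destruct (approx_div x0 b d (e/4)) as [D3 [HD3 E3]]; try lra; auto.
    assert (HT : GD a b d a b (D1 ++ (x, x0, x0) :: D3)).
    { eapply GD_app; eauto. econstructor; eauto; try lra. apply Rabs_def2 in Hdx; lra. specialize (Hd x0); lra. }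
    specialize (HP _ HT). rewrite rsum_app, rsum_cons in HP.
    rewrite Hua, Rminus_0_r in E1.
    assert (Hpc : Rabs (g x0 * (x0 - x)) <= e / 4).
    { rewrite Rabs_mult, Rabs_minus_sym. auto. }
    apply Rabs_def2 in E1. apply Rabs_def2 in E3. apply Rabs_def2 in HP. apply Rabs_le_b in Hpc.
    apply Rabs_def1; lra.
  - subst. rewrite Rminus_diag, Rabs_R0. auto.
  - destruct (approx_div a x0 d (e/4)) as [D1 [HD1 E1]]; try lra; auto.
    destruct (approx_div x b d (e/4)) as [D3 [HD3 E3]]; try lra; auto.
    assert (HT : GD a b d a b (D1 ++ (x0, x, x0) :: D3)).
    { eapply GD_app; eauto. econstructor; eauto; try lra. specialize (Hd x0); lra. apply Rabs_def2 in Hdx; lra. }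
    specialize (HP _ HT). rewrite rsum_app, rsum_cons in HP.
    rewrite Hua, Rminus_0_r in E1.
    assert (Hpc : Rabs (g x0 * (x - x0)) <= e / 4) by (rewrite Rabs_mult; auto).
    apply Rabs_def2 in E1. apply Rabs_def2 in E3. apply Rabs_def2 in HP. apply Rabs_le_b in Hpc.
    apply Rabs_def1; lra.
Qed.

End Indef.

Definition clamp (a b x : R) := Rmax a (Rmin b x).

Lemma clamp_in a b x : a <= b -> a <= clamp a b x <= b.
Proof. intros H. unfold clamp, Rmax, Rmin. repeat destruct Rle_dec; lra. Qed.
Lemma clamp_id a b x : a <= x <= b -> clamp a b x = x.
Proof. intros H. unfold clamp, Rmax, Rmin. repeat destruct Rle_dec; lra. Qed.
Lemma clamp_lip a b x y : a <= b -> Rabs (clamp a b x - clamp a b y) <= Rabs (x - y).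
Proof. intros H. unfold clamp, Rmax, Rmin. repeat destruct Rle_dec; unfold Rabs; repeat destruct Rcase_abs; lra. Qed.

Lemma clamp_cont a b u x : a <= b ->
  (forall x0, a <= x0 <= b -> forall e, 0 < e -> exists eta, 0 < eta /\
     forall x, a <= x <= b -> Rabs (x - x0) < eta -> Rabs (u x - u x0) < e) ->
  a <= x <= b -> continuity_pt (fun y => u (clamp a b y)) x.
Proof.
  intros Hab Hc Hx e He. destruct (Hc x Hx e He) as [eta [Heta H]].
  exists eta. split; auto. intros y [_ Hy]. simpl in *. unfold R_dist in *.
  rewrite (clamp_id a b x Hx). apply H. apply clamp_in; auto.
  assert (Hl := clamp_lip a b y x Hab). rewrite (clamp_id a b x Hx) in Hl. lra.
Qed.

End P6.

Module P7.
Import P1 P2 P3 P4 P5 P6.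
Set Bullet Behavior "Strict Subproofs".

Definition ind (c d : R) (h : R -> R) (x : R) : R :=
  if Rle_dec c x then if Rle_dec x d then h x else 0 else 0.

Lemma ind_in c d h x : c <= x <= d -> ind c d h x = h x.
Proof. intros H; unfold ind; repeat destruct Rle_dec; lra. Qed.
Lemma ind_out c d h x : x < c \/ d < x -> ind c d h x = 0.
Proof. intros H; unfold ind; repeat destruct Rle_dec; auto; lra. Qed.
Lemma ind_comp c d h F x : F 0 = 0 -> F (ind c d h x) = ind c d (fun y => F (h y)) x.
Proof. intros H; unfold ind; repeat destruct Rle_dec; auto. Qed.

Lemma MS_zero_pt F a b z : a < b -> (forall t, a <= t <= b -> t <> z -> F t = 0) -> McShane_int F a b 0.
Proof.
  intros Hab H. apply MS_point with (h := fun _ => 0) (z := z); auto.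
  assert (H0 := MS_const 0 a b Hab). rewrite Rmult_0_l in H0. exact H0.
Qed.

Lemma pad_left F a c z K : McShane_int F c z K -> a <= c -> (forall t, a <= t < c -> F t = 0) ->
  McShane_int F a z K.
Proof.
  intros H Hac HF. destruct (Req_dec a c) as [->|Hne]; auto.
  replace K with (0 + K) by ring. apply MS_conc with c; auto.
  apply MS_zero_pt with c; [lra|]. intros t Ht Hne'. apply HF; lra.
Qed.

Lemma pad_right F a d b K : McShane_int F a d K -> d <= b -> (forall t, d < t <= b -> F t = 0) ->
  McShane_int F a b K.
Proof.
  intros H Hdb HF. destruct (Req_dec d b) as [<-|Hne]; auto.
  replace K with (K + 0) by ring. apply MS_conc with d; auto.
  apply MS_zero_pt with d; [lra|]. intros t Ht Hne'. apply HF; lra.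
Qed.

Lemma ext_zero f a b I c d : McShane_int f a b I -> a <= c -> c < d -> d <= b ->
  exists K, McShane_int f c d K /\ McShane_int (ind c d f) a b K.
Proof.
  intros H H1 H2 H3. destruct (MS_sub _ _ _ _ c d H H1 H2 H3) as [K HK]. exists K. split; auto.
  apply pad_right with d; auto; [|intros; apply ind_out; lra].
  apply pad_left with c; auto; [|intros; apply ind_out; lra].
  apply MS_ext with f; auto. intros; rewrite ind_in; auto.
Qed.

Lemma ind_restrict F a b c d J : McShane_int (ind c d F) a b J -> a <= c -> c < d -> d <= b ->
  McShane_int F c d J.
Proof.
  intros H H1 H2 H3. destruct (MS_sub _ _ _ _ c d H H1 H2 H3) as [K HK].
  assert (HK' : McShane_int (ind c d F) a b K).
  { apply pad_right with d; auto; [|intros; apply ind_out; lra].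
    apply pad_left with c; auto. intros; apply ind_out; lra. }
  rewrite (MS_unique _ _ _ _ _ H HK'). apply MS_ext with (ind c d F); auto.
  intros; rewrite ind_in; auto.
Qed.

Lemma trunc0 N : 0 < N -> Rmax (- N) (Rmin N 0) = 0.
Proof. intros H; unfold Rmax, Rmin; repeat destruct Rle_dec; lra. Qed.

Lemma restrict_W0 p a b u g cp dp : W0 p a b u g -> a <= cp -> cp < dp -> dp <= b ->
  u cp = 0 -> u dp = 0 -> W0 p cp dp u g.
Proof.
  intros [Hab [Hm [Hi [Hua [Hu Hub]]]]] H1 H2 H3 Hc Hd.
  split; [auto|split; [|split; [|split; [auto|split; [|auto]]]]].
  - intros N HN. destruct (Hm N HN) as [I HI]. eapply MS_sub; eauto.
  - destruct Hi as [I HI]. eapply MS_sub; eauto.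
  - intros x Hx. replace (u x) with (u x - u cp) by (rewrite Hc; ring). apply indef_int with (a := a) (b := b); auto; lra.
Qed.

Lemma test_W0 p a b u g cp dp : W0 p a b u g -> a <= cp -> cp < dp -> dp <= b ->
  u cp = 0 -> u dp = 0 -> W0 p a b (ind cp dp u) (ind cp dp g).
Proof.
  intros [Hab [Hm [Hi [Hua [Hu Hub]]]]] H1 H2 H3 Hc Hd.
  assert (Case1 : forall x, a < x <= cp -> McShane_int (ind cp dp g) a x (ind cp dp u x)).
  { intros x Hx. replace (ind cp dp u x) with 0.
    - apply MS_zero_pt with cp; [lra|]. intros t Ht Hne. apply ind_out; lra.
    - destruct (Req_dec x cp) as [->|Hne]; [rewrite ind_in; lra|rewrite ind_out; lra]. }
  assert (Case2 : forall x, cp < x <= dp -> McShane_int (ind cp dp g) a x (ind cp dp u x)).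
  { intros x Hx. rewrite ind_in by lra. apply pad_left with cp; auto; [|intros; apply ind_out; lra].
    apply MS_ext with g; [|intros; rewrite ind_in; lra].
    replace (u x) with (u x - u cp) by (rewrite Hc; ring). apply indef_int with (a := a) (b := b); auto; lra. }
  split; [auto|split; [|split; [|split; [|split]]]].
  - intros N HN. destruct (Hm N HN) as [I HI].
    destruct (ext_zero _ _ _ _ cp dp HI H1 H2 H3) as [K [_ HK]]. exists K.
    apply MS_ext with (ind cp dp (fun x => Rmax (- N) (Rmin N (g x)))); auto.
    intros t _. rewrite ind_comp with (F := fun y => Rmax (- N) (Rmin N y)); auto. apply trunc0; auto.
  - destruct Hi as [I HI].
    destruct (ext_zero _ _ _ _ cp dp HI H1 H2 H3) as [K [_ HK]]. exists K.
    apply MS_ext with (ind cp dp (fun x => pw (Rabs (g x)) p)); auto.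
    intros t _. rewrite ind_comp with (F := fun y => pw (Rabs y) p); auto. rewrite Rabs_R0; apply pw_0.
  - unfold ind. repeat destruct Rle_dec; auto.
  - intros x Hx. destruct (Rle_or_lt x cp); [apply Case1; lra|].
    destruct (Rle_or_lt x dp); [apply Case2; lra|].
    rewrite ind_out by lra. pose proof (Case2 dp ltac:(lra)) as Hdp. rewrite ind_in, Hd in Hdp by lra.
    apply pad_right with dp; auto; [lra|]. intros; apply ind_out; lra.
  - unfold ind. repeat destruct Rle_dec; auto.
Qed.

Lemma nodal_core p a b u g (Rhs : R -> R) cp dp K :
  1 < p -> a <= cp -> cp < dp -> dp <= b -> W0 p a b u g -> u cp = 0 -> u dp = 0 ->
  nontrivial_on cp dp u ->
  (forall phi psi, W0 p a b phi psi -> exists J,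
      McShane_int (fun x => phip p (g x) * psi x) a b J /\ McShane_int (fun x => Rhs x * phi x) a b J) ->
  0 <= K -> (forall x, cp < x < dp -> Rhs x * u x <= K * pw (Rabs (u x)) p) ->
  forall L, is_mu1 p cp dp L -> L <= K.
Proof.
  intros Hp H1 H2 H3 HW Hc Hd Hnt Hweak HK Hbound L [HL _].
  pose proof HW as [Hab [Hm [Hi [Hua [Hu Hub]]]]].
  destruct (Hweak _ _ (test_W0 p a b u g cp dp HW H1 H2 H3 Hc Hd)) as [J [HJ1 HJ2]].
  assert (HA : McShane_int (fun x => pw (Rabs (g x)) p) cp dp J).
  { apply ind_restrict with a b; auto. apply MS_ext with (fun x => phip p (g x) * ind cp dp g x); auto.
    intros t _. unfold ind. repeat destruct Rle_dec; try ring. apply phip_mul. }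
  assert (HR : McShane_int (fun x => Rhs x * u x) cp dp J).
  { apply ind_restrict with a b; auto. apply MS_ext with (fun x => Rhs x * ind cp dp u x); auto.
    intros t _. unfold ind. repeat destruct Rle_dec; ring. }
  assert (Hcont : forall x, cp <= x <= dp -> continuity_pt (fun y => pw (Rabs (u (clamp a b y))) p) x).
  { intros x Hx. apply continuity_pt_comp with (f1 := fun y => u (clamp a b y)) (f2 := fun z => pw (Rabs z) p).
    - apply clamp_cont; [lra| |lra]. intros x0 Hx0 e He. apply indef_cont with g; auto.
    - apply pw_abs_cont; lra. }
  pose proof (MS_RInt _ cp dp H2 Hcont) as HB0.
  assert (HBe : exists B, McShane_int (fun x => pw (Rabs (u x)) p) cp dp B).
  { eexists. apply MS_ext with (1 := HB0). intros t Ht. rewrite clamp_id; auto; lra. }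
  destruct HBe as [B HB].
  assert (HJB : J <= K * B).
  { apply MS_mono with (1 := HR) (2 := MS_scal K _ _ _ _ HB). intros t Ht.
    destruct (Req_dec t cp) as [->|Hn1]. { rewrite Hc, Rabs_R0, pw_0. lra. }
    destruct (Req_dec t dp) as [->|Hn2]. { rewrite Hd, Rabs_R0, pw_0. lra. }
    apply Hbound; lra. }
  assert (HB0' : 0 <= B) by (apply MS_ge0 with (1 := HB); intros; apply pw_nonneg).
  assert (Hq : RQ p (fun _ => 1) cp dp (J / B)).
  { exists u, g, J, B. split; [apply restrict_W0 with a b; auto|]. split; auto. split; auto. split; auto.
    apply MS_ext with (1 := HB). intros; ring. }
  specialize (HL _ Hq). destruct (Req_dec B 0) as [E|E].
  - rewrite E in HL. unfold Rdiv in HL. rewrite Rinv_0, Rmult_0_r in HL. lra.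
  - apply Rle_trans with (J / B); auto. apply Rmult_le_reg_r with B; [lra|].
    unfold Rdiv. rewrite Rmult_assoc, Rinv_l, Rmult_1_r; auto.
Qed.

End P7.

Module P8.
Import P1 P2 P3 P4 P5 P6 P7.
Import Coquelicot.Coquelicot.
Set Bullet Behavior "Strict Subproofs".

Lemma cont_ext_all F G z : continuity_pt F z -> (forall w, G w = F w) -> continuity_pt G z.
Proof. intros H E. apply cont_ext with F 1; auto; lra. Qed.

Lemma dpl_ext f g x l r : derivable_pt_lim f x l -> 0 < r -> (forall y, Rabs (y - x) < r -> f y = g y) ->
  derivable_pt_lim g x l.
Proof.
  intros H Hr E e He. destruct (H e He) as [[d Hd] Hh]. simpl in Hh.
  assert (Hm : 0 < Rmin d r) by (apply Rmin_glb_lt; auto).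
  exists (mkposreal _ Hm). intros h Hh0 Hhd. simpl in Hhd.
  rewrite <- !E. apply Hh; auto. pose proof (Rmin_l d r); lra.
  rewrite Rminus_diag, Rabs_R0; auto. replace (x + h - x) with h by ring. pose proof (Rmin_r d r); lra.
Qed.

Lemma Rpower_1_base e : Rpower 1 e = 1.
Proof. unfold Rpower. rewrite ln_1, Rmult_0_r, exp_0. auto. Qed.

Lemma pw_cont e y : 0 < e -> continuity_pt (fun y => pw y e) y.
Proof.
  intros He. destruct (Rtotal_order y 0) as [Hl|[E|Hg]].
  - apply cont_ext with (fun _ => 0) (- y); [apply continuity_pt_const; intros ? ?; auto|lra|].
    intros w Hw. apply Rabs_def2 in Hw. apply pw_le0. lra.
  - subst. intros eps Heps. destruct (pw_abs_cont e 0 He eps Heps) as [d [Hd H]].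
    exists d. split; auto. intros x [Dx Hx]. specialize (H x (conj Dx Hx)). simpl in *. unfold R_dist in *.
    rewrite Rabs_R0, pw_0 in H. rewrite pw_0. rewrite Rminus_0_r in *.
    rewrite Rabs_right in H by apply Rle_ge, pw_nonneg. rewrite Rabs_right by apply Rle_ge, pw_nonneg.
    destruct (Rle_or_lt x 0). rewrite pw_le0; auto; lra. rewrite Rabs_right in H; lra.
  - apply cont_ext with (fun w => pw (Rabs w) e) y; [apply pw_abs_cont; auto|lra|].
    intros w Hw. apply Rabs_def2 in Hw. rewrite Rabs_right; lra.
Qed.

Lemma pw_deriv e y : 1 < e -> derivable_pt_lim (fun y => pw y e) y (e * pw y (e - 1)).
Proof.
  intros He. destruct (Rtotal_order y 0) as [Hl|[E|Hg]].
  - rewrite pw_le0 by lra. rewrite Rmult_0_r.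
    apply dpl_ext with (fun _ => 0) (- y); [apply derivable_pt_lim_const|lra|].
    intros w Hw. apply Rabs_def2 in Hw. rewrite pw_le0; lra.
  - subst. rewrite pw_0, Rmult_0_r. intros eps Heps.
    assert (Hd : 0 < Rpower eps (/ (e - 1))) by apply Rpower_pos.
    exists (mkposreal _ Hd). intros h Hh0 Hh. simpl in Hh.
    rewrite Rplus_0_l, pw_0, Rminus_0_r, Rminus_0_r.
    destruct (Rle_or_lt h 0) as [Hn|Hp].
    + rewrite pw_le0 by auto. unfold Rdiv. rewrite Rmult_0_l, Rabs_R0. auto.
    + rewrite <- (pw_mul h e) by auto. unfold Rdiv. rewrite Rmult_assoc, Rinv_r, Rmult_1_r by lra.
      rewrite Rabs_right by apply Rle_ge, pw_nonneg. rewrite pw_pos by auto.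
      rewrite Rabs_right in Hh by lra.
      apply Rlt_le_trans with (Rpower (Rpower eps (/ (e - 1))) (e - 1)).
      * apply Rlt_Rpower_l; lra.
      * rewrite Rpower_mult. replace (/ (e - 1) * (e - 1)) with 1 by (field; lra). rewrite Rpower_1; lra.
  - rewrite pw_pos by auto.
    apply dpl_ext with (fun w => Rpower w e) y; [apply derivable_pt_lim_power; auto|lra|].
    intros w Hw. apply Rabs_def2 in Hw. rewrite pw_pos; auto; lra.
Qed.

Section FP.
Variable p : R.
Hypothesis Hp : 1 < p.

Definition fR (y : R) : R := pw (1 - pw y p) (- (1 / p)).

Lemma pwp_lt1 y : y < 1 -> pw y p < 1.
Proof.
  intros H. destruct (Rle_or_lt y 0). rewrite pw_le0; lra.
  rewrite pw_pos by auto. rewrite <- (Rpower_1_base p). apply Rlt_Rpower_l; lra.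
Qed.

Lemma base_pos y : y < 1 -> 0 < 1 - pw y p.
Proof. intros H. pose proof (pwp_lt1 y H). lra. Qed.

Lemma fR_eq y : y < 1 -> fR y = Rpower (1 - pw y p) (- (1 / p)).
Proof. intros H. unfold fR. apply pw_pos, base_pos; auto. Qed.

Lemma fR_ge1 y : y < 1 -> 1 <= fR y.
Proof.
  intros H. rewrite fR_eq by auto. rewrite Rpower_Ropp.
  assert (0 < Rpower (1 - pw y p) (1 / p)) by apply Rpower_pos.
  assert (Rpower (1 - pw y p) (1 / p) <= 1).
  { apply Rle_trans with (Rpower 1 (1 / p)); [|rewrite Rpower_1_base; lra]. apply Rle_Rpower_l.
    - apply Rlt_le, Rdiv_lt_0_compat; lra.
    - split; [apply base_pos; auto|]. pose proof (pw_nonneg y p); lra. }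
  apply Rle_trans with (/ 1); [rewrite Rinv_1; lra|]. apply Rinv_le_contravar; auto.
Qed.

Lemma fR_pos y : y < 1 -> 0 < fR y.
Proof. intros H; pose proof (fR_ge1 y H); lra. Qed.

Lemma base_cont y : continuity_pt (fun y => 1 - pw y p) y.
Proof.
  apply continuity_pt_minus with (f1 := fun _ => 1) (f2 := fun y => pw y p).
  - apply continuity_pt_const. intros ? ?; auto.
  - apply pw_cont; lra.
Qed.

Lemma fR_cont y : y < 1 -> continuity_pt fR y.
Proof.
  intros H. apply cont_ext with (fun w => Rpower (1 - pw w p) (- (1 / p))) (1 - y); [|lra|].
  - apply continuity_pt_comp with (f1 := fun w => 1 - pw w p) (f2 := fun z => Rpower z (- (1 / p))).
    + apply base_cont.
    + apply Rpower_cont. apply base_pos; auto.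
  - intros w Hw. apply Rabs_def2 in Hw. apply fR_eq. lra.
Qed.

Definition FR (y : R) : R := RInt fR 0 y.

Lemma ex_RInt_fR y1 y2 : y1 < 1 -> y2 < 1 -> ex_RInt fR y1 y2.
Proof.
  intros H1 H2. apply (@ex_RInt_continuous R_CompleteNormedModule). intros z Hz.
  apply cont_coq. apply fR_cont. destruct Hz as [_ Hz]. unfold Rmax in Hz. destruct Rle_dec; lra.
Qed.

Lemma FR_deriv y : y < 1 -> is_derive FR y (fR y).
Proof.
  intros H. apply (@is_derive_RInt R_NormedModule) with (a := 0).
  - exists (mkposreal ((1 - y) / 2) ltac:(apply Rdiv_lt_0_compat; lra)).
    intros b Hb. unfold ball in Hb; simpl in Hb. unfold AbsRing_ball, abs, minus, plus, opp in Hb; simpl in Hb.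
    apply Rabs_def2 in Hb. apply (@RInt_correct R_CompleteNormedModule). apply ex_RInt_fR; lra.
  - apply cont_coq. apply fR_cont; auto.
Qed.

Lemma FR_0 : FR 0 = 0.
Proof. unfold FR. apply (@RInt_point R_CompleteNormedModule). Qed.

Lemma FR_incr y1 y2 : y1 <= y2 -> y2 < 1 -> y2 - y1 <= FR y2 - FR y1.
Proof.
  intros H12 H2. unfold FR.
  assert (E : RInt fR 0 y2 = RInt fR 0 y1 + RInt fR y1 y2).
  { rewrite <- (RInt_Chasles fR 0 y1 y2); [reflexivity| |]; apply ex_RInt_fR; lra. }
  rewrite E. ring_simplify.
  assert (RInt (fun _ => 1) y1 y2 <= RInt fR y1 y2).
  { apply RInt_le; auto. apply ex_RInt_const. apply ex_RInt_fR; lra. intros x Hx. apply fR_ge1; lra. }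
  rewrite RInt_const in H. unfold scal in H; simpl in H; unfold mult in H; simpl in H. lra.
Qed.

End FP.

End P8.

Module P11.
Import P1 P2 P3 P4 P5 P6 P7 P8.
Import Coquelicot.Coquelicot.
Set Bullet Behavior "Strict Subproofs".

Lemma Rpower_inv x e : 0 < x -> Rpower (/ x) e = / Rpower x e.
Proof. intros H. unfold Rpower. rewrite ln_Rinv by auto. rewrite <- exp_Ropp. f_equal. ring. Qed.

Section IBP.
Variables (p Y : R).
Hypothesis Hp : 1 < p.
Hypothesis HY0 : 0 < Y.
Hypothesis HY1 : Y < 1.

Definition DD := RInt (fun y => fR p y * pw y p) 0 Y.
Definition NN := RInt (fun y => (1 - pw y p) * fR p y) 0 Y.
Definition qq := (p - 1) / p.
Definition EE y := y * Rpower (1 - pw y p) qq.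

Lemma cont_on_Y (f : R -> R) : (forall y, y < 1 -> continuity_pt f y) -> ex_RInt f 0 Y.
Proof.
  intros H. apply (@ex_RInt_continuous R_CompleteNormedModule). intros z Hz.
  rewrite Rmin_left, Rmax_right in Hz by lra. apply cont_coq. apply H. lra.
Qed.

Lemma pwp_cont y : continuity_pt (fun y => pw y p) y.
Proof. apply pw_cont; lra. Qed.

Lemma exD : ex_RInt (fun y => fR p y * pw y p) 0 Y.
Proof. apply cont_on_Y. intros y Hy. apply continuity_pt_mult with (f1 := fR p) (f2 := fun y => pw y p); [apply fR_cont; auto|apply pwp_cont]. Qed.

Lemma exN : ex_RInt (fun y => (1 - pw y p) * fR p y) 0 Y.
Proof. apply cont_on_Y. intros y Hy. apply continuity_pt_mult with (f1 := fun y => 1 - pw y p) (f2 := fR p); [apply base_cont; auto|apply fR_cont; auto]. Qed.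

Lemma ND_sum : NN + DD = FR p Y.
Proof.
  unfold NN, DD, FR. symmetry. apply is_RInt_unique.
  apply is_RInt_ext with (fun y => plus ((1 - pw y p) * fR p y) (fR p y * pw y p)).
  - intros x _. unfold plus; simpl. ring.
  - apply (@is_RInt_plus R_NormedModule); apply (@RInt_correct R_CompleteNormedModule); [apply exN|apply exD].
Qed.

Definition EEd y := Rpower (1 - pw y p) qq + y * (qq * Rpower (1 - pw y p) (qq - 1) * (- (p * pw y (p - 1)))).

Lemma EE_deriv y : y < 1 -> derivable_pt_lim EE y (EEd y).
Proof.
  intros Hy. unfold EE, EEd.
  assert (Hb : derivable_pt_lim (fun y => 1 - pw y p) y (0 - p * pw y (p - 1))).
  { apply (derivable_pt_lim_minus (fun _ => 1) (fun y => pw y p)). apply derivable_pt_lim_const. apply pw_deriv; auto. }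
  assert (Hc : derivable_pt_lim (fun y => Rpower (1 - pw y p) qq) y (qq * Rpower (1 - pw y p) (qq - 1) * (0 - p * pw y (p - 1)))).
  { apply (derivable_pt_lim_comp (fun y => 1 - pw y p) (fun z => Rpower z qq)); auto.
    apply derivable_pt_lim_power. apply base_pos; auto. }
  assert (Hm := derivable_pt_lim_mult (fun y => y) (fun y => Rpower (1 - pw y p) qq) y 1 _ (derivable_pt_lim_id y) Hc).
  replace (Rpower (1 - pw y p) qq + y * (qq * Rpower (1 - pw y p) (qq - 1) * - (p * pw y (p - 1))))
    with (1 * Rpower (1 - pw y p) qq + y * (qq * Rpower (1 - pw y p) (qq - 1) * (0 - p * pw y (p - 1)))) by ring.
  exact Hm.
Qed.

Lemma EEd_eq y : 0 <= y < 1 -> EEd y = (1 - pw y p) * fR p y - (p - 1) * (fR p y * pw y p).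
Proof.
  intros Hy. unfold EEd. rewrite fR_eq by lra. pose proof (base_pos p Hp y ltac:(lra)) as Hb.
  assert (E1 : Rpower (1 - pw y p) qq = (1 - pw y p) * Rpower (1 - pw y p) (- (1 / p))).
  { rewrite <- (Rpower_1 (1 - pw y p)) at 2 by auto. rewrite <- Rpower_plus. f_equal. unfold qq. field. lra. }
  assert (E2 : qq - 1 = - (1 / p)) by (unfold qq; field; lra).
  assert (E3 : y * pw y (p - 1) = pw y p).
  { destruct (Req_dec y 0) as [->|Hn]. rewrite !pw_0; ring. rewrite Rmult_comm. apply pw_mul; lra. }
  rewrite E1, E2. unfold qq.
  replace (y * ((p - 1) / p * Rpower (1 - pw y p) (- (1 / p)) * - (p * pw y (p - 1))))
    with (- ((p - 1) * (y * pw y (p - 1)) * Rpower (1 - pw y p) (- (1 / p)))) by (field; lra).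
  rewrite E3. ring.
Qed.

Lemma EEd_cont y : y < 1 -> continuity_pt EEd y.
Proof.
  intros Hy. pose proof (base_pos p Hp y Hy) as Hb. unfold EEd.
  apply continuity_pt_plus with (f1 := fun y => Rpower (1 - pw y p) qq)
    (f2 := fun y => y * (qq * Rpower (1 - pw y p) (qq - 1) * - (p * pw y (p - 1)))).
  - apply continuity_pt_comp with (f1 := fun y => 1 - pw y p) (f2 := fun z => Rpower z qq); [apply base_cont; auto|apply Rpower_cont; auto].
  - apply continuity_pt_mult with (f1 := fun y => y) (f2 := fun y => qq * Rpower (1 - pw y p) (qq - 1) * - (p * pw y (p - 1))).
    + apply derivable_continuous_pt, derivable_id.
    + apply continuity_pt_mult with (f1 := fun y => qq * Rpower (1 - pw y p) (qq - 1)) (f2 := fun y => - (p * pw y (p - 1))).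
      * apply continuity_pt_scal with (f := fun y => Rpower (1 - pw y p) (qq - 1)).
        apply continuity_pt_comp with (f1 := fun y => 1 - pw y p) (f2 := fun z => Rpower z (qq - 1)); [apply base_cont; auto|apply Rpower_cont; auto].
      * apply continuity_pt_opp with (f := fun y => p * pw y (p - 1)).
        apply continuity_pt_scal with (f := fun y => pw y (p - 1)). apply pw_cont; lra.
Qed.

Lemma ND_ibp : NN - (p - 1) * DD = EE Y.
Proof.
  assert (H1 : is_RInt EEd 0 Y (minus (EE Y) (EE 0))).
  { apply (@is_RInt_derive R_CompleteNormedModule).
    - intros x Hx. rewrite Rmin_left, Rmax_right in Hx by lra. apply is_derive_Reals. apply EE_deriv; lra.
    - intros x Hx. rewrite Rmin_left, Rmax_right in Hx by lra. apply cont_coq. apply EEd_cont; lra. }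
  assert (H2 : is_RInt EEd 0 Y (minus NN (scal (p - 1) DD))).
  { apply is_RInt_ext with (fun y => minus ((1 - pw y p) * fR p y) (scal (p - 1) (fR p y * pw y p))).
    - intros x Hx. rewrite Rmin_left, Rmax_right in Hx by lra. rewrite EEd_eq by lra.
      unfold minus, plus, opp, scal; simpl. unfold mult; simpl. ring.
    - apply (@is_RInt_minus R_NormedModule).
      + apply (@RInt_correct R_CompleteNormedModule). apply exN.
      + apply (@is_RInt_scal R_NormedModule). apply (@RInt_correct R_CompleteNormedModule). apply exD. }
  apply (@is_RInt_unique R_CompleteNormedModule) in H1. apply (@is_RInt_unique R_CompleteNormedModule) in H2. rewrite H1 in H2.
  unfold minus, plus, opp, scal in H2; simpl in H2. unfold mult in H2; simpl in H2.
  unfold EE in *. lra.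
Qed.

End IBP.

Lemma A_integrand_eq p lam y : 1 < p -> 0 < lam -> y < 1 ->
  lam * fR p y * pw (/ (lam * fR p y)) p = Rpower lam (1 - p) * ((1 - pw y p) * fR p y).
Proof.
  intros Hp Hl Hy. pose proof (fR_pos p Hp y Hy) as Hf. pose proof (base_pos p Hp y Hy) as Hb.
  assert (Hlf : 0 < lam * fR p y) by nra.
  rewrite pw_pos by (apply Rinv_0_lt_compat; auto). rewrite Rpower_inv by auto.
  assert (E : lam * fR p y * / Rpower (lam * fR p y) p = Rpower (lam * fR p y) (1 - p)).
  { replace (1 - p) with (1 + - p) by ring. rewrite Rpower_plus, Rpower_1, Rpower_Ropp by auto. auto. }
  rewrite E. rewrite <- Rpower_mult_distr by auto. f_equal.
  rewrite fR_eq by auto. rewrite Rpower_mult.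
  transitivity (Rpower (1 - pw y p) 1 * Rpower (1 - pw y p) (- (1 / p))).
  - rewrite <- Rpower_plus. f_equal. field. lra.
  - rewrite Rpower_1 by auto. auto.
Qed.

End P11.

Module P9.
Import P1 P2 P3 P4 P5 P6 P7 P8 P11.
Import Coquelicot.Coquelicot.
Set Bullet Behavior "Strict Subproofs".

Lemma cont_pt_of_derive f x l : is_derive f x l -> continuity_pt f x.
Proof. intros H. apply derivable_continuous_pt. exists l. apply is_derive_Reals. auto. Qed.

Ltac fixeq := match goal with |- @eq _ ?a ?b => change (@eq R a b) end.

Lemma ex_RInt_cont_all (f : R -> R) a b : (forall x, continuity_pt f x) -> ex_RInt f a b.
Proof. intros H. apply (@ex_RInt_continuous R_CompleteNormedModule). intros; apply cont_coq; auto. Qed.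

Lemma RInt_refl (H : R -> R) a b c d : (forall x, continuity_pt H x) ->
  RInt (fun s => H (c + d - s)) a b = RInt H (c + d - b) (c + d - a).
Proof.
  intros Hc.
  assert (E := RInt_comp_lin H (-1) (c + d) a b (ex_RInt_cont_all H _ _ Hc)).
  assert (E2 : RInt (fun y => scal (-1) (H (-1 * y + (c + d)))) a b = - RInt (fun s => H (c + d - s)) a b).
  { rewrite <- (RInt_opp (fun s => H (c + d - s))); [|apply ex_RInt_cont_all; intros; apply continuity_pt_comp with (f2 := H); auto;
      apply continuity_pt_minus; [apply continuity_pt_const; intros ? ?; auto|apply derivable_continuous_pt, derivable_id]].
    apply RInt_ext. intros x _. unfold scal, opp; simpl. unfold mult; simpl.
    replace (-1 * x + (c + d)) with (c + d - x) by ring. ring. }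
  assert (E3 : - RInt (fun s => H (c + d - s)) a b = RInt H (-1 * a + (c + d)) (-1 * b + (c + d))).
  { rewrite <- E2. exact E. }
  clear E E2. rename E3 into E.
  replace (-1 * a + (c + d)) with (c + d - a) in E by ring.
  replace (-1 * b + (c + d)) with (c + d - b) in E by ring.
  rewrite <- (opp_RInt_swap H) in E; [|apply ex_RInt_cont_all; auto].
  unfold opp in E; simpl in E. lra.
Qed.

Lemma refl_cont (H : R -> R) c x : (forall x, continuity_pt H x) -> continuity_pt (fun s => H (c - s)) x.
Proof.
  intros Hc. apply continuity_pt_comp with (f1 := fun s => c - s) (f2 := H); auto.
  apply continuity_pt_minus with (f1 := fun _ => c) (f2 := fun s => s).
  - apply continuity_pt_const; intros ? ?; auto.
  - apply derivable_continuous_pt, derivable_id.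
Qed.

Lemma J_ge p J Y : 1 < p -> McShane_int (fR p) 0 1 J -> 0 < Y < 1 -> FR p Y <= J.
Proof.
  intros Hp HJ HY. destruct (MS_split _ 0 Y 1 J HJ) as [I1 [I2 [H1 [H2 E]]]]; try lra.
  assert (E1 : I1 = FR p Y).
  { apply MS_unique with (fR p) 0 Y; auto. apply MS_RInt; [lra|]. intros; apply fR_cont; auto; lra. }
  assert (0 <= I2) by (apply MS_ge0 with (1 := H2); intros; apply pw_nonneg). lra.
Qed.

Section TF.
Set Default Proof Using "All".
Variables (p Y c0 d0 : R).
Hypothesis Hp : 1 < p.
Hypothesis HY0 : 0 < Y.
Hypothesis HY1 : Y < 1.
Hypothesis Hcd : c0 < d0.

Lemma FRY_ge : Y <= FR p Y.
Proof. pose proof (FR_incr p Hp 0 Y ltac:(lra) HY1). rewrite FR_0 in H. lra. Qed.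

Definition lam := (d0 - c0) / (2 * FR p Y).
Lemma lam_pos : 0 < lam.
Proof. unfold lam. pose proof FRY_ge. apply Rdiv_lt_0_compat; lra. Qed.

Definition X y := lam * FR p y.
Definition hh := (d0 - c0) / 2.
Definition mid := c0 + hh.

Lemma XY : X Y = hh.
Proof. unfold X, lam, hh. pose proof FRY_ge. field. lra. Qed.
Lemma X0 : X 0 = 0.
Proof. unfold X. rewrite FR_0. ring. Qed.
Lemma hh_pos : 0 < hh.
Proof. unfold hh; lra. Qed.

Lemma X_incr y1 y2 : y1 <= y2 -> y2 < 1 -> lam * (y2 - y1) <= X y2 - X y1.
Proof.
  intros H1 H2. unfold X. pose proof (FR_incr p Hp y1 y2 H1 H2). pose proof lam_pos.
  replace (lam * FR p y2 - lam * FR p y1) with (lam * (FR p y2 - FR p y1)) by ring.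
  apply Rmult_le_compat_l; lra.
Qed.

Lemma X_deriv y : y < 1 -> is_derive X y (lam * fR p y).
Proof. intros H. unfold X. apply (is_derive_scal (FR p)). apply FR_deriv; auto. Qed.

Lemma X_cont y : y < 1 -> continuity_pt X y.
Proof. intros H. eapply cont_pt_of_derive. apply X_deriv; auto. Qed.

Definition Xc y := X (clamp 0 Y y).

Lemma clamp_cont_pt a b x : a <= b -> continuity_pt (clamp a b) x.
Proof.
  intros Hab e He. exists e. split; auto. intros y [_ Hy]. simpl in *. unfold R_dist in *.
  eapply Rle_lt_trans; [apply clamp_lip; auto|auto].
Qed.

Lemma Xc_cont : continuity Xc.
Proof.
  intros y. unfold Xc. apply continuity_pt_comp with (f1 := clamp 0 Y) (f2 := X).
  - apply clamp_cont_pt; lra.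
  - apply X_cont. pose proof (clamp_in 0 Y y ltac:(lra)). lra.
Qed.

Lemma XY_pos : 0 <= X Y.
Proof. rewrite XY. pose proof hh_pos; lra. Qed.

Lemma G_range_pf z : Rmin (Xc 0) (Xc Y) <= clamp 0 (X Y) z <= Rmax (Xc 0) (Xc Y).
Proof.
  unfold Xc. rewrite !clamp_id by lra. rewrite X0. pose proof XY_pos.
  rewrite Rmin_left, Rmax_right by lra. apply clamp_in; lra.
Qed.

Definition G (z : R) : R := proj1_sig (IVT_gen Xc 0 Y (clamp 0 (X Y) z) Xc_cont (G_range_pf z)).

Lemma G_spec z : 0 <= G z <= Y /\ X (G z) = clamp 0 (X Y) z.
Proof.
  unfold G. destruct (IVT_gen Xc 0 Y (clamp 0 (X Y) z) Xc_cont (G_range_pf z)) as [y [Hy E]]. simpl.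
  rewrite Rmin_left, Rmax_right in Hy by lra. split; auto. unfold Xc in E. rewrite clamp_id in E; auto.
Qed.

Lemma X_inj y1 y2 : 0 <= y1 <= Y -> 0 <= y2 <= Y -> X y1 = X y2 -> y1 = y2.
Proof.
  intros H1 H2 E. pose proof lam_pos. destruct (Rtotal_order y1 y2) as [Hl|[|Hg]]; auto.
  - pose proof (X_incr y1 y2 ltac:(lra) ltac:(lra)). nra.
  - pose proof (X_incr y2 y1 ltac:(lra) ltac:(lra)). nra.
Qed.

Lemma X_range y : 0 <= y <= Y -> 0 <= X y <= X Y.
Proof.
  intros H. pose proof (X_incr 0 y ltac:(lra) ltac:(lra)). pose proof (X_incr y Y ltac:(lra) ltac:(lra)).
  rewrite X0 in *. pose proof lam_pos. nra.
Qed.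

Lemma GX y : 0 <= y <= Y -> G (X y) = y.
Proof.
  intros H. destruct (G_spec (X y)) as [Hr E]. rewrite clamp_id in E by (apply X_range; auto).
  apply X_inj; auto.
Qed.

Lemma XG z : 0 <= z <= X Y -> X (G z) = z.
Proof. intros H. destruct (G_spec z) as [_ E]. rewrite E. apply clamp_id; auto. Qed.

Lemma G_lip z1 z2 : lam * Rabs (G z1 - G z2) <= Rabs (z1 - z2).
Proof.
  destruct (G_spec z1) as [H1 E1]. destruct (G_spec z2) as [H2 E2].
  assert (Hc : Rabs (X (G z1) - X (G z2)) <= Rabs (z1 - z2)) by (rewrite E1, E2; apply clamp_lip; apply XY_pos).
  pose proof lam_pos.
  destruct (Rle_or_lt (G z1) (G z2)).
  - pose proof (X_incr (G z1) (G z2) ltac:(lra) ltac:(lra)).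
    rewrite Rabs_left1 in * by lra. rewrite (Rabs_left1 (X (G z1) - X (G z2))) in Hc by nra. nra.
  - pose proof (X_incr (G z2) (G z1) ltac:(lra) ltac:(lra)).
    rewrite Rabs_right in * by lra. rewrite (Rabs_right (X (G z1) - X (G z2))) in Hc by nra. nra.
Qed.

Lemma G_cont z : continuity_pt G z.
Proof.
  intros e He. pose proof lam_pos. exists (lam * e). split; [nra|]. intros y [_ Hy]. simpl in *. unfold R_dist in *.
  pose proof (G_lip y z). apply Rmult_lt_reg_l with lam; auto. lra.
Qed.

Lemma G0 : G 0 = 0.
Proof. rewrite <- X0 at 1. apply GX. lra. Qed.

Lemma G_lt1 z : G z < 1.
Proof. destruct (G_spec z) as [H _]. lra. Qed.

Definition vv x := G (hh - Rabs (x - mid)).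
Definition g1 z := / (lam * fR p (G (z - c0))).
Definition gg x := if Rle_dec x mid then g1 x else - g1 (c0 + d0 - x).

Lemma vv_cont x : continuity_pt vv x.
Proof.
  unfold vv. apply continuity_pt_comp with (f1 := fun x => hh - Rabs (x - mid)) (f2 := G); [|apply G_cont].
  apply continuity_pt_minus with (f1 := fun _ => hh) (f2 := fun x => Rabs (x - mid)).
  - apply continuity_pt_const; intros ? ?; auto.
  - apply continuity_pt_comp with (f1 := fun x => x - mid) (f2 := Rabs); [|apply Rcontinuity_abs].
    apply continuity_pt_minus with (f1 := fun x => x) (f2 := fun _ => mid).
    + apply derivable_continuous_pt, derivable_id.
    + apply continuity_pt_const; intros ? ?; auto.
Qed.

Lemma g1_cont z : continuity_pt g1 z.
Proof.
  unfold g1. pose proof lam_pos.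
  apply continuity_pt_inv with (f := fun z => lam * fR p (G (z - c0))).
  - apply continuity_pt_scal with (f := fun z => fR p (G (z - c0))).
    apply continuity_pt_comp with (f1 := fun z => G (z - c0)) (f2 := fR p).
    + apply continuity_pt_comp with (f1 := fun z => z - c0) (f2 := G); [|apply G_cont].
      apply continuity_pt_minus with (f1 := fun x => x) (f2 := fun _ => c0).
      * apply derivable_continuous_pt, derivable_id.
      * apply continuity_pt_const; intros ? ?; auto.
    + apply fR_cont; auto. apply G_lt1.
  - pose proof (fR_pos p Hp (G (z - c0)) (G_lt1 _)). nra.
Qed.

Lemma mid_eq : mid = c0 + X Y.
Proof. unfold mid. rewrite XY. auto. Qed.

Lemma subst_int (H : R -> R) y1 : 0 <= y1 <= Y -> (forall x, c0 <= x <= mid -> continuity_pt H x) ->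
  RInt H c0 (c0 + X y1) = RInt (fun y => lam * fR p y * H (c0 + X y)) 0 y1.
Proof.
  intros Hy1 Hc.
  assert (E := RInt_comp H (fun y => c0 + X y) (fun y => lam * fR p y) 0 y1).
  cbv beta in E. rewrite X0, Rplus_0_r in E. rewrite <- E.
  - apply RInt_ext. intros x Hx. reflexivity.
  - intros x Hx. rewrite Rmin_left, Rmax_right in Hx by lra. apply cont_coq. apply Hc.
    pose proof (X_range x ltac:(lra)). pose proof (X_incr x Y ltac:(lra) HY1). rewrite mid_eq. lra.
  - intros x Hx. rewrite Rmin_left, Rmax_right in Hx by lra. split.
    + assert (D : is_derive (fun y => c0 + X y) x (0 + lam * fR p x)).
      { apply is_derive_Reals. apply (derivable_pt_lim_plus (fun _ => c0) X).
        apply derivable_pt_lim_const. apply is_derive_Reals, X_deriv; lra. }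
      rewrite Rplus_0_l in D. exact D.
    + apply cont_coq. apply continuity_pt_scal with (f := fR p). apply fR_cont; auto; lra.
Qed.
Lemma mid_props : c0 < mid /\ mid < d0 /\ c0 + d0 - mid = mid /\ mid - c0 = hh /\ d0 - mid = hh.
Proof. unfold mid, hh. repeat split; lra. Qed.

Lemma g1_cont_all z : continuity_pt g1 z.
Proof. apply g1_cont. Qed.

Lemma RInt_g1 y1 : 0 <= y1 <= Y -> RInt g1 c0 (c0 + X y1) = y1.
Proof.
  intros Hy. rewrite (subst_int g1 y1 Hy) by (intros; apply g1_cont).
  transitivity (RInt (fun _ => 1) 0 y1).
  2:{ rewrite RInt_const; unfold scal; simpl; unfold mult; simpl; ring. }
  apply RInt_ext. intros x Hx. cbv beta. rewrite Rmin_left, Rmax_right in Hx by lra.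
  unfold g1. replace (c0 + X x - c0) with (X x) by ring. rewrite GX by lra.
  pose proof lam_pos. pose proof (fR_pos p Hp x ltac:(lra)).
  fixeq. field. split; lra.
Qed.

Lemma RInt_g1_x x : c0 <= x <= mid -> RInt g1 c0 x = G (x - c0).
Proof.
  intros Hx. destruct (G_spec (x - c0)) as [Hr E].
  rewrite clamp_id in E.
  - rewrite <- (RInt_g1 (G (x - c0))) by auto. f_equal. rewrite E. ring.
  - rewrite XY. destruct mid_props as [? [? [? [? ?]]]]. lra.
Qed.

Lemma vv_left x : c0 <= x <= mid -> vv x = G (x - c0).
Proof. intros H. unfold vv. f_equal. destruct mid_props as [? [? [? [? ?]]]]. rewrite Rabs_left1 by lra. lra. Qed.
Lemma vv_right x : mid <= x -> vv x = G (d0 - x).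
Proof. intros H. unfold vv. f_equal. destruct mid_props as [? [? [? [? ?]]]]. rewrite Rabs_right by lra. lra. Qed.
Lemma vv_sym x : vv (c0 + d0 - x) = vv x.
Proof. unfold vv. f_equal. destruct mid_props as [? [? [? [? ?]]]]. f_equal.
  replace (c0 + d0 - x - mid) with (- (x - mid)) by lra. apply Rabs_Ropp. Qed.

Lemma RInt_g2 x : mid <= x <= d0 -> RInt (fun s => - g1 (c0 + d0 - s)) mid x = G (d0 - x) - G hh.
Proof.
  intros Hx. destruct mid_props as [M1 [M2 [M3 [M4 M5]]]].
  assert (Hex : ex_RInt (fun s => g1 (c0 + d0 - s)) mid x) by (apply ex_RInt_cont_all; intros; apply refl_cont; apply g1_cont).
  assert (E0 : RInt (fun s => - g1 (c0 + d0 - s)) mid x = - RInt (fun s => g1 (c0 + d0 - s)) mid x).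
  { etransitivity; [|apply (RInt_opp _ _ _ Hex)]. apply RInt_ext. intros; reflexivity. }
  rewrite E0. rewrite RInt_refl by apply g1_cont. rewrite M3.
  assert (Ch : RInt g1 c0 mid = RInt g1 c0 (c0 + d0 - x) + RInt g1 (c0 + d0 - x) mid).
  { rewrite <- (RInt_Chasles g1 c0 (c0 + d0 - x) mid); [reflexivity| |]; apply ex_RInt_cont_all, g1_cont. }
  rewrite (RInt_g1_x mid) in Ch by lra. rewrite (RInt_g1_x (c0 + d0 - x)) in Ch by lra.
  rewrite M4 in Ch. replace (c0 + d0 - x - c0) with (d0 - x) in Ch by ring. lra.
Qed.

Lemma Hgg_left x : x <= mid -> gg x = g1 x.
Proof. intros H. unfold gg. destruct Rle_dec; [auto|lra]. Qed.
Lemma Hgg_right x : mid < x -> gg x = - g1 (c0 + d0 - x).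
Proof. intros H. unfold gg. destruct Rle_dec; [lra|auto]. Qed.

Lemma gg_int x : c0 < x <= d0 -> McShane_int gg c0 x (vv x).
Proof.
  intros Hx. destruct mid_props as [M1 [M2 [M3 [M4 M5]]]].
  assert (Left : forall x, c0 < x <= mid -> McShane_int gg c0 x (vv x)).
  { intros z Hz. rewrite vv_left by lra. rewrite <- RInt_g1_x by lra.
    apply MS_ext with g1; [apply MS_RInt; [lra|intros; apply g1_cont]|].
    intros t Ht. rewrite Hgg_left; auto; lra. }
  destruct (Rle_or_lt x mid); [apply Left; lra|].
  rewrite vv_right by lra. replace (G (d0 - x)) with (G hh + (G (d0 - x) - G hh)) by ring.
  apply MS_conc with mid.
  - rewrite <- M4. rewrite <- vv_left by lra. apply Left; lra.
  - rewrite <- RInt_g2 by lra. apply MS_point with (fun s => - g1 (c0 + d0 - s)) mid.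
    + apply MS_RInt; [lra|]. intros; apply continuity_pt_opp. apply refl_cont; apply g1_cont.
    + intros t Ht Hne. rewrite Hgg_right; auto; lra.
Qed.

Lemma sym_int (H F : R -> R) : (forall x, continuity_pt H x) ->
  (forall s, c0 <= s <= mid -> F s = H s) -> (forall s, mid <= s <= d0 -> F s = H (c0 + d0 - s)) ->
  McShane_int F c0 d0 (2 * RInt H c0 mid).
Proof.
  intros Hc HL HR. destruct mid_props as [M1 [M2 [M3 [M4 M5]]]].
  replace (2 * RInt H c0 mid) with (RInt H c0 mid + RInt (fun s => H (c0 + d0 - s)) mid d0).
  - apply MS_conc with mid.
    + apply MS_ext with H; [apply MS_RInt; [lra|auto]|]. intros; rewrite HL; auto.
    + apply MS_ext with (fun s => H (c0 + d0 - s)); [apply MS_RInt; [lra|]|].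
      * intros; apply refl_cont; auto.
      * intros; rewrite HR; auto.
  - rewrite RInt_refl by auto. rewrite M3. replace (c0 + d0 - d0) with c0 by ring. ring.
Qed.

Definition H1 s := pw (Rabs (g1 s)) p.
Definition Hv s := pw (Rabs (vv s)) p.

Lemma H1_cont x : continuity_pt H1 x.
Proof. unfold H1. apply continuity_pt_comp with (f1 := g1) (f2 := fun z => pw (Rabs z) p); [apply g1_cont|apply pw_abs_cont; lra]. Qed.
Lemma Hv_cont x : continuity_pt Hv x.
Proof. unfold Hv. apply continuity_pt_comp with (f1 := vv) (f2 := fun z => pw (Rabs z) p); [apply vv_cont|apply pw_abs_cont; lra]. Qed.

Lemma A_int : McShane_int (fun x => pw (Rabs (gg x)) p) c0 d0 (2 * RInt H1 c0 mid).
Proof.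
  apply sym_int; [apply H1_cont| |].
  - intros s Hs. unfold H1. rewrite Hgg_left; auto; lra.
  - intros s Hs. unfold H1. destruct (Req_dec s mid) as [E|E].
    + subst s. destruct mid_props as [M1 [M2 [M3 [M4 M5]]]]. rewrite M3, Hgg_left; auto; lra.
    + rewrite Hgg_right by lra. rewrite Rabs_Ropp. auto.
Qed.

Lemma B_int : McShane_int (fun x => pw (Rabs (vv x)) p) c0 d0 (2 * RInt Hv c0 mid).
Proof.
  apply sym_int; [apply Hv_cont| |].
  - intros s Hs. unfold Hv. auto.
  - intros s Hs. unfold Hv. rewrite vv_sym. auto.
Qed.

Lemma A_val : RInt H1 c0 mid = RInt (fun y => lam * fR p y * pw (/ (lam * fR p y)) p) 0 Y.
Proof.
  destruct mid_props as [M1 [M2 [M3 [M4 M5]]]].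
  rewrite mid_eq.
  rewrite (subst_int H1 Y) by (try lra; intros; apply H1_cont).
  apply RInt_ext. intros x Hx. cbv beta. rewrite Rmin_left, Rmax_right in Hx by lra. unfold H1, g1.
  replace (c0 + X x - c0) with (X x) by ring. rewrite GX by lra.
  pose proof lam_pos. pose proof (fR_pos p Hp x ltac:(lra)).
  rewrite Rabs_right; auto. apply Rle_ge, Rlt_le, Rinv_0_lt_compat. nra.
Qed.

Lemma B_val : RInt Hv c0 mid = RInt (fun y => lam * fR p y * pw y p) 0 Y.
Proof.
  destruct mid_props as [M1 [M2 [M3 [M4 M5]]]].
  rewrite mid_eq.
  rewrite (subst_int Hv Y) by (try lra; intros; apply Hv_cont).
  apply RInt_ext. intros x Hx. cbv beta. rewrite Rmin_left, Rmax_right in Hx by lra. unfold Hv.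
  pose proof (X_range x ltac:(lra)). rewrite XY in H.
  rewrite vv_left.
  - replace (c0 + X x - c0) with (X x) by ring. rewrite GX by lra. rewrite Rabs_right by lra. auto.
  - unfold mid. lra.
Qed.

Lemma vv_W0 : W0 p c0 d0 vv gg.
Proof.
  destruct mid_props as [M1 [M2 [M3 [M4 M5]]]].
  split; [auto|split; [|split; [|split; [|split]]]].
  - intros N HN. set (tr := fun z => Rmax (- N) (Rmin N z)).
    assert (Htr : forall z, continuity_pt tr z).
    { intros z e He. exists e. split; auto. intros y [_ Hy]. simpl in *. unfold R_dist in *. unfold tr.
      unfold Rmax, Rmin; repeat destruct Rle_dec; unfold Rabs in *; repeat destruct Rcase_abs; lra. }
    exists (RInt (fun s => tr (g1 s)) c0 mid + RInt (fun s => tr (- g1 (c0 + d0 - s))) mid d0).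
    apply MS_conc with mid.
    + apply MS_ext with (fun s => tr (g1 s)); [apply MS_RInt; [lra|]|].
      * intros; apply continuity_pt_comp with (f2 := tr); auto. apply g1_cont.
      * intros t Ht. unfold tr. rewrite Hgg_left; auto; lra.
    + apply MS_point with (fun s => tr (- g1 (c0 + d0 - s))) mid; [apply MS_RInt; [lra|]|].
      * intros; apply continuity_pt_comp with (f2 := tr); auto. apply continuity_pt_opp, refl_cont, g1_cont.
      * intros t Ht Hne. unfold tr. rewrite Hgg_right; auto; lra.
  - eexists. apply A_int.
  - rewrite vv_left by lra. replace (c0 - c0) with 0 by ring. apply G0.
  - apply gg_int.
  - rewrite vv_right by lra. replace (d0 - d0) with 0 by ring. apply G0.
Qed.

Lemma vv_nontriv : nontrivial_on c0 d0 vv.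
Proof.
  destruct mid_props as [M1 [M2 [M3 [M4 M5]]]].
  exists mid. split; [lra|]. rewrite vv_left by lra. rewrite M4.
  rewrite <- XY. rewrite GX by lra. lra.
Qed.


Lemma TF_final J eps : McShane_int (fR p) 0 1 J -> 0 < eps ->
  Rpower (1 - pw Y p) ((p - 1) / p) <= Rmin (1 / 2) (eps / (2 * p * Rpower (2 * J / (d0 - c0)) p)) ->
  exists A B, McShane_int (fun x => pw (Rabs (gg x)) p) c0 d0 A /\ McShane_int (fun x => pw (Rabs (vv x)) p) c0 d0 B /\
    0 < B /\ A <= (Rpower (2 * Rpower (p - 1) (1 / p) * J / (d0 - c0)) p + eps) * B.
Proof.
  intros HJ He Hmu.
  set (mu := Rpower (1 - pw Y p) ((p - 1) / p)) in Hmu.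
  assert (Hmu0 : 0 < mu) by apply Rpower_pos.
  assert (Hmu1 : mu <= 1 / 2) by (pose proof (Rmin_l (1 / 2) (eps / (2 * p * Rpower (2 * J / (d0 - c0)) p))); lra).
  set (Fy := FR p Y).
  assert (HFy : Y <= Fy) by apply FRY_ge.
  assert (HJF : Fy <= J) by (apply J_ge; auto).
  set (l := d0 - c0). assert (Hl : 0 < l) by (unfold l; lra).
  set (La := Rpower (2 * Fy / l) p). set (La' := Rpower (2 * J / l) p).
  assert (HLa : 0 < La) by apply Rpower_pos. assert (HLa' : 0 < La') by apply Rpower_pos.
  assert (HLL : La <= La').
  { unfold La, La'. apply Rle_Rpower_l; [lra|]. split; [apply Rdiv_lt_0_compat; lra|]. unfold Rdiv. apply Rmult_le_compat_r; [apply Rlt_le, Rinv_0_lt_compat; lra|lra]. }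
  assert (Hmu2 : mu <= eps / (2 * p * La')) by (pose proof (Rmin_r (1 / 2) (eps / (2 * p * Rpower (2 * J / (d0 - c0)) p))); unfold La', l; lra).
  assert (S1 : NN p Y + DD p Y = FR p Y) by (apply ND_sum; auto).
  assert (S2 : NN p Y - (p - 1) * DD p Y = EE p Y) by (apply ND_ibp; auto).
  unfold EE, qq in S2. assert (Emu : Rpower (1 - pw Y p) ((p - 1) / p) = mu) by reflexivity.
  rewrite Emu in S2. fold Fy in S1.
  assert (HD : Y / (2 * p) <= DD p Y).
  { assert (Y * mu <= Y / 2) by nra. apply Rmult_le_reg_l with (2 * p); [lra|].
    replace (2 * p * (Y / (2 * p))) with Y by (field; lra). nra. }
  assert (HD0 : 0 < DD p Y) by (apply Rlt_le_trans with (Y / (2 * p)); auto; apply Rdiv_lt_0_compat; lra).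
  pose proof lam_pos as Hlam.
  assert (Elam : lam = l / (2 * Fy)) by reflexivity.
  assert (EA : RInt H1 c0 mid = Rpower lam (1 - p) * NN p Y).
  { rewrite A_val. unfold NN. rewrite <- (RInt_scal (fun y => (1 - pw y p) * fR p y)).
    - apply RInt_ext. intros x Hx. rewrite Rmin_left, Rmax_right in Hx by lra.
      rewrite A_integrand_eq by (auto; lra). reflexivity.
    - apply exN; auto; lra. }
  assert (EB : RInt Hv c0 mid = lam * DD p Y).
  { rewrite B_val. unfold DD. rewrite <- (RInt_scal (fun y => fR p y * pw y p)).
    - apply RInt_ext. intros x Hx. unfold scal; simpl; unfold mult; simpl. ring.
    - apply exD; auto; lra. }
  exists (2 * RInt H1 c0 mid), (2 * RInt Hv c0 mid). split; [apply A_int|]. split; [apply B_int|].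
  rewrite EA, EB. split; [nra|].
  assert (Epow : Rpower lam (1 - p) = lam * La).
  { replace (1 - p) with (1 + - p) by ring. rewrite Rpower_plus, Rpower_1, Rpower_Ropp by auto.
    f_equal. unfold La. rewrite <- Rpower_inv. f_equal. rewrite Elam. field. split; lra. rewrite Elam. apply Rdiv_lt_0_compat; lra. }
  assert (EK : Rpower (2 * Rpower (p - 1) (1 / p) * J / l) p = (p - 1) * La').
  { unfold La'. replace (2 * Rpower (p - 1) (1 / p) * J / l) with (Rpower (p - 1) (1 / p) * (2 * J / l)) by (field; lra).
    rewrite <- Rpower_mult_distr. rewrite Rpower_mult. replace (1 / p * p) with 1 by (field; lra). rewrite Rpower_1 by lra. auto.
    apply Rpower_pos. apply Rdiv_lt_0_compat; lra. }
  rewrite Epow, EK.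
  assert (Main : La * NN p Y <= ((p - 1) * La' + eps) * DD p Y).
  { assert (NN p Y = (p - 1) * DD p Y + Y * mu) by lra. rewrite H.
    assert (T1 : La * ((p - 1) * DD p Y) <= (p - 1) * La' * DD p Y).
    { replace (La * ((p - 1) * DD p Y)) with (((p - 1) * DD p Y) * La) by ring.
      replace ((p - 1) * La' * DD p Y) with (((p - 1) * DD p Y) * La') by ring.
      apply Rmult_le_compat_l; [|auto]. apply Rmult_le_pos; lra. }
    assert (T2 : La * (Y * mu) <= eps * DD p Y).
    { apply Rle_trans with (La' * (Y * mu)). { apply Rmult_le_compat_r; [apply Rmult_le_pos; lra|auto]. }
      apply Rle_trans with (La' * (Y * (eps / (2 * p * La')))). { apply Rmult_le_compat_l; [lra|]. apply Rmult_le_compat_l; lra. }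
      replace (La' * (Y * (eps / (2 * p * La')))) with (eps * (Y / (2 * p))) by (field; lra).
      apply Rmult_le_compat_l; lra. }
    lra. }
  match goal with |- ?L <= ?R => idtac end.
  replace (2 * (lam * La * NN p Y)) with ((2 * lam) * (La * NN p Y)) by ring.
  replace (((p - 1) * La' + eps) * (2 * (lam * DD p Y))) with ((2 * lam) * (((p - 1) * La' + eps) * DD p Y)) by ring.
  apply Rmult_le_compat_l; lra.
Qed.

End TF.

End P9.

Module P12.
Import P1 P2 P3 P4 P5 P6 P7 P8 P11 P9.
Import Coquelicot.Coquelicot.
Set Bullet Behavior "Strict Subproofs".

Lemma choose_Y p mu : 1 < p -> 0 < mu < 1 -> exists Y, 0 < Y < 1 /\ Rpower (1 - pw Y p) ((p - 1) / p) = mu.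
Proof.
  intros Hp Hmu. set (q := (p - 1) / p). assert (Hq : 0 < q) by (unfold q; apply Rdiv_lt_0_compat; lra).
  set (z := Rpower mu (/ q)).
  assert (Hz0 : 0 < z) by apply Rpower_pos.
  assert (Hz1 : z < 1).
  { unfold z. apply Rlt_le_trans with (Rpower 1 (/ q)); [|rewrite Rpower_1_base; lra].
    apply Rlt_Rpower_l; [apply Rinv_0_lt_compat; auto|lra]. }
  exists (Rpower (1 - z) (1 / p)). split.
  - split; [apply Rpower_pos|]. apply Rlt_le_trans with (Rpower 1 (1 / p)); [|rewrite Rpower_1_base; lra].
    apply Rlt_Rpower_l; [apply Rdiv_lt_0_compat; lra|lra].
  - rewrite pw_pos by apply Rpower_pos. rewrite Rpower_mult. replace (1 / p * p) with 1 by (field; lra).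
    rewrite Rpower_1 by lra. replace (1 - (1 - z)) with z by ring. unfold z. rewrite Rpower_mult.
    replace (/ q * q) with 1 by (field; lra). apply Rpower_1; lra.
Qed.

Lemma test_exists p c0 d0 J eps : 1 < p -> c0 < d0 -> McShane_int (fR p) 0 1 J -> 0 < eps ->
  exists v g A B, W0 p c0 d0 v g /\ nontrivial_on c0 d0 v /\
    McShane_int (fun x => pw (Rabs (g x)) p) c0 d0 A /\ McShane_int (fun x => pw (Rabs (v x)) p) c0 d0 B /\
    0 < B /\ A <= (Rpower (2 * Rpower (p - 1) (1 / p) * J / (d0 - c0)) p + eps) * B /\
    (forall x, continuity_pt v x).
Proof.
  intros Hp Hcd HJ He.
  set (mu := Rmin (1 / 2) (eps / (2 * p * Rpower (2 * J / (d0 - c0)) p))).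
  assert (Hmu : 0 < mu < 1).
  { unfold mu. split.
    - apply Rmin_glb_lt; [lra|]. apply Rdiv_lt_0_compat; auto. pose proof (Rpower_pos (2 * J / (d0 - c0)) p). nra.
    - pose proof (Rmin_l (1 / 2) (eps / (2 * p * Rpower (2 * J / (d0 - c0)) p))). lra. }
  destruct (choose_Y p mu Hp Hmu) as [Y [[HY0 HY1] EY]].
  destruct (TF_final p Y c0 d0 Hp HY0 HY1 Hcd J eps HJ He) as [A [B [HA [HB [HB0 HAB]]]]].
  { rewrite EY. unfold mu. lra. }
  exists (vv p Y c0 d0 Hp HY0 HY1 Hcd), (gg p Y c0 d0 Hp HY0 HY1 Hcd), A, B.
  split; [apply vv_W0|]. split; [apply vv_nontriv|]. split; auto. split; auto. split; auto. split; auto.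
  intros x. apply vv_cont.
Qed.

Lemma trunc_bound N z : 0 < N -> Rabs (Rmax (- N) (Rmin N z)) <= N.
Proof. intros H. unfold Rmax, Rmin; repeat destruct Rle_dec; unfold Rabs; destruct Rcase_abs; lra. Qed.

Lemma trunc_id N z : - N <= z <= N -> Rmax (- N) (Rmin N z) = z.
Proof. intros H. unfold Rmax, Rmin; repeat destruct Rle_dec; lra. Qed.

Lemma RQ_nonneg p r c0 d0 q : (forall x, c0 < x < d0 -> 0 <= r x) -> RQ p r c0 d0 q -> 0 <= q.
Proof.
  intros Hr [v [g [A [B [HW [_ [HA [HB E]]]]]]]]. subst q.
  destruct HW as [_ [_ [_ [Hvc [_ Hvd]]]]].
  assert (A0 : 0 <= A) by (apply MS_ge0 with (1 := HA); intros; apply pw_nonneg).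
  assert (B0 : 0 <= B).
  { apply MS_ge0 with (1 := HB). intros t Ht.
    destruct (Req_dec t c0) as [->|N1]; [rewrite Hvc, Rabs_R0, pw_0; lra|].
    destruct (Req_dec t d0) as [->|N2]; [rewrite Hvd, Rabs_R0, pw_0; lra|].
    apply Rmult_le_pos; [apply Hr; lra|apply pw_nonneg]. }
  destruct (Req_dec B 0) as [->|NB]. { unfold Rdiv. rewrite Rinv_0, Rmult_0_r. lra. }
  apply Rmult_le_pos; auto. apply Rlt_le, Rinv_0_lt_compat. lra.
Qed.

Lemma lambda1_nonneg p r c0 d0 L : (forall x, c0 < x < d0 -> 0 <= r x) -> is_lambda1 p r c0 d0 L -> 0 <= L.
Proof. intros Hr [_ H]. apply H. intros q Hq. eapply RQ_nonneg; eauto. Qed.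

Section Weight.
Variables (p a b thm thp J : R) (r : R -> R).
Hypothesis Hp : 1 < p.
Hypothesis Hab : a < b.
Hypothesis Hr : measurable_on r a b.
Hypothesis Hthm : 0 < thm.
Hypothesis Hrb : forall x, a < x < b -> thm <= r x <= thp.
Hypothesis HJ : McShane_int (fR p) 0 1 J.

Lemma weighted_test c0 d0 eps : a <= c0 -> c0 < d0 -> d0 <= b -> 0 < eps ->
  exists q, RQ p r c0 d0 q /\ q <= (Rpower (2 * Rpower (p - 1) (1 / p) * J / (d0 - c0)) p + eps) / thm.
Proof.
  intros H1 H2 H3 He.
  assert (Hthp : thm <= thp) by (destruct (Hrb ((a + b) / 2)); lra).
  destruct (test_exists p c0 d0 J eps Hp H2 HJ He) as [v [g [A [B1 [HW [Hnt [HA [HB1 [HB0 [HAB Hc]]]]]]]]]].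
  pose proof HW as [_ [_ [_ [Hvc [_ Hvd]]]]].
  destruct (Hr thp ltac:(lra)) as [I HI].
  destruct (MS_sub _ _ _ _ c0 d0 HI H1 H2 H3) as [I' HI'].
  destruct (MS_prod _ (fun x => pw (Rabs (v x)) p) c0 d0 I' thp HI') as [Br HBr].
  { intros; apply trunc_bound; lra. }
  { intros t _. apply continuity_pt_comp with (f1 := v) (f2 := fun z => pw (Rabs z) p); auto. apply pw_abs_cont; lra. }
  assert (HBr' : McShane_int (fun x => r x * pw (Rabs (v x)) p) c0 d0 Br).
  { apply MS_ext with (1 := HBr). intros t Ht.
    destruct (Req_dec t c0) as [->|N1]; [rewrite Hvc, Rabs_R0, pw_0; ring|].
    destruct (Req_dec t d0) as [->|N2]; [rewrite Hvd, Rabs_R0, pw_0; ring|].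
    rewrite trunc_id; auto. destruct (Hrb t); lra. }
  assert (Hmono : thm * B1 <= Br).
  { apply MS_mono with (1 := MS_scal thm _ _ _ _ HB1) (2 := HBr'). intros t Ht.
    destruct (Req_dec t c0) as [->|N1]; [rewrite Hvc, Rabs_R0, pw_0; lra|].
    destruct (Req_dec t d0) as [->|N2]; [rewrite Hvd, Rabs_R0, pw_0; lra|].
    apply Rmult_le_compat_r; [apply pw_nonneg|]. destruct (Hrb t); lra. }
  exists (A / Br). split.
  - exists v, g, A, Br. split; [exact HW|]. split; [exact Hnt|]. split; [exact HA|]. split; [exact HBr'|reflexivity].
  - assert (HBr0 : 0 < Br) by nra.
    set (K := Rpower (2 * Rpower (p - 1) (1 / p) * J / (d0 - c0)) p) in *.
    unfold Rdiv. apply Rle_trans with (A * / (thm * B1)).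
    + apply Rmult_le_compat_l. { apply MS_ge0 with (1 := HA); intros; apply pw_nonneg. }
      apply Rinv_le_contravar; [nra|auto].
    + rewrite Rinv_mult. replace (A * (/ thm * / B1)) with ((A * / B1) * / thm) by ring.
      apply Rmult_le_compat_r; [apply Rlt_le, Rinv_0_lt_compat; auto|].
      apply Rmult_le_reg_r with B1; auto. rewrite Rmult_assoc, Rinv_l by lra. lra.
Qed.

Lemma lambda1_exists c0 d0 : a <= c0 -> c0 < d0 -> d0 <= b -> exists L, is_lambda1 p r c0 d0 L.
Proof.
  intros H1 H2 H3.
  destruct (weighted_test c0 d0 1 H1 H2 H3 ltac:(lra)) as [q0 [Hq0 _]].
  set (E := fun y => RQ p r c0 d0 (- y)).
  assert (HE : bound E).
  { exists 0. intros y Hy. unfold E in Hy. apply RQ_nonneg in Hy; [lra|]. intros x Hx. destruct (Hrb x); lra. }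
  destruct (completeness E HE ltac:(exists (- q0); unfold E; rewrite Ropp_involutive; auto)) as [m [Hub Hlub]].
  exists (- m). split.
  - intros q Hq. assert (- q <= m) by (apply Hub; unfold E; rewrite Ropp_involutive; auto). lra.
  - intros L' HL'. assert (m <= - L'). { apply Hlub. intros y Hy. specialize (HL' _ Hy). lra. } lra.
Qed.

Lemma lambda1_bound c0 d0 L : a <= c0 -> c0 < d0 -> d0 <= b -> is_lambda1 p r c0 d0 L ->
  L <= Rpower (2 * Rpower (p - 1) (1 / p) * J / (d0 - c0)) p / thm.
Proof.
  intros H1 H2 H3 [HL _].
  set (K := Rpower (2 * Rpower (p - 1) (1 / p) * J / (d0 - c0)) p).
  destruct (Rle_or_lt L (K / thm)) as [|Hlt]; auto. exfalso.
  set (eps := (L - K / thm) * thm / 2).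
  assert (He : 0 < eps) by (unfold eps; apply Rmult_lt_0_compat; [|lra]; apply Rmult_lt_0_compat; lra).
  destruct (weighted_test c0 d0 eps H1 H2 H3 He) as [q [Hq Hqb]].
  specialize (HL q Hq). fold K in Hqb.
  assert ((K + eps) / thm = K / thm + (L - K / thm) / 2) by (unfold eps; field; lra).
  lra.
Qed.

End Weight.

End P12.

Import P1 P2 P3 P4 P5 P6 P7 P8 P11 P9 P12.

Lemma partition_bounds k a b t : is_partition k a b t -> forall i, (i <= S k)%nat -> a <= t i <= b.
Proof.
  intros [H0 [HSk Hinc]] i Hi. split.
  - rewrite <- H0. clear HSk. induction i; [lra|]. specialize (Hinc i ltac:(lia)). specialize (IHi ltac:(lia)). lra.
  - assert (G : forall d, (d <= S k)%nat -> t (S k - d)%nat <= b).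
    { induction d; intros Hd. { rewrite Nat.sub_0_r, HSk; lra. }
      specialize (IHd ltac:(lia)). specialize (Hinc (S k - S d)%nat ltac:(lia)).
      replace (S (S k - S d)) with (S k - d)%nat in Hinc by lia. lra. }
    specialize (G (S k - i)%nat ltac:(lia)). replace (S k - (S k - i))%nat with i in G by lia. auto.
Qed.

Fixpoint vm (W : nat -> R) (n : nat) : R :=
  match n with O => W 1%nat | S n' => Rmax (vm W n') (W (S (S n'))) end.

Lemma vm_spec W n : (forall j, (1 <= j <= S n)%nat -> W j <= vm W n) /\
  exists j, (1 <= j <= S n)%nat /\ vm W n = W j.
Proof.
  induction n as [|n [IH1 [j [Hj Ej]]]].
  - split. + intros j Hj. replace j with 1%nat by lia. simpl; lra. + exists 1%nat. split; [lia|reflexivity].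
  - split.
    + intros i Hi. simpl. destruct (Nat.eq_dec i (S (S n))) as [->|Hne]; [apply Rmax_r|].
      eapply Rle_trans; [apply IH1; lia|apply Rmax_l].
    + simpl. unfold Rmax at 1. destruct Rle_dec.
      * exists (S (S n)). split; [lia|reflexivity].
      * exists j. split; [lia|auto].
Qed.

Theorem lemma4p5 (a b p : R) (k : nat) (m n : R -> R) (thm thp : R)
  (sg : bool) (s c : R) (u g : R -> R)
  (cp dp cm dm : R) (PI : R) :
  a < b -> 1 < p -> (1 <= k)%nat ->
  measurable_on m a b -> measurable_on n a b ->
  0 < thm ->
  (forall x, a < x < b -> thm <= m x <= thp /\ thm <= n x <= thp) ->
  0 < s ->
  is_c p sg s m n k a b c ->
  weak_solution p (c / s) c m n a b u g ->
  nontrivial_on a b u ->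
  pos_nodal a b u cp dp ->
  neg_nodal a b u cm dm ->
  is_pi_p p PI ->
  let C := thp / thm * (Rpower PI p * Rpower (INR (S k)) p * Rpower (b - a) (- p)) in
  (forall L, is_mu1 p cp dp L -> L <= C * gamma s) /\
  (forall L, is_mu1 p cm dm L -> L <= C * s * gamma s).
Proof.
  intros Hab Hp Hk Hm Hn Hthm Hmn Hs Hc [HW Hweak] Hnt Hpos Hneg [J [HJ0 EPI]] C.
  assert (HJ : McShane_int (fR p) 0 1 J) by exact HJ0.
  assert (Hthp : thm <= thp) by (destruct (Hmn ((a + b) / 2)) as [[? ?] _]; lra).
  set (w := cw_weight sg m n). set (co := cw_coef sg s).
  assert (Hw : forall j, measurable_on (w j) a b /\ forall x, a < x < b -> thm <= w j x <= thp).
  { intros j. unfold w, cw_weight. destruct (Bool.eqb (Nat.odd j) sg); split; auto; intros x Hx; apply Hmn; auto. }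
  assert (Hco : forall j, 0 < co j <= Rmax s 1).
  { intros j. unfold co, cw_coef. destruct (Bool.eqb (Nat.odd j) sg); split; try lra; [apply Rmax_l|apply Rmax_r]. }
  assert (Hc0 : 0 <= c).
  { destruct Hc as [_ Hc2]. apply Hc2. intros V [t [Ht [L [HL1 [HL2 [j [Hj EV]]]]]]].
    rewrite EV. pose proof (partition_bounds k a b t Ht) as PB.
    apply Rmult_le_pos; [destruct (Hco j); unfold co in *; lra|].
    apply lambda1_nonneg with p (cw_weight sg m n j) (t (pred j)) (t j); [|apply HL1; auto].
    intros x Hx. pose proof (PB (pred j) ltac:(lia)). pose proof (PB j ltac:(lia)).
    destruct (Hw j) as [_ Hb]. destruct (Hb x ltac:(lra)). fold w. lra. }
  (* c upper bound via equal partition *)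
  set (l := (b - a) / INR (S k)).
  assert (HSk : 0 < INR (S k)) by (apply lt_0_INR; lia).
  assert (Hl : 0 < l) by (unfold l; apply Rdiv_lt_0_compat; lra).
  set (t := fun i : nat => a + INR i * l).
  assert (Ht : is_partition k a b t).
  { split; [unfold t; simpl; ring|split].
    - unfold t, l. field. lra.
    - intros i Hi. unfold t. rewrite S_INR. lra. }
  pose proof (partition_bounds k a b t Ht) as PB.
  set (Kl := Rpower (2 * Rpower (p - 1) (1 / p) * J / l) p).
  assert (HLex : forall j, exists L, (1 <= j <= S k)%nat -> is_lambda1 p (w j) (t (pred j)) (t j) L).
  { intros j. destruct (Compare_dec.le_dec 1 j) as [H1|H1]; [destruct (Compare_dec.le_dec j (S k)) as [H2|H2]|].
    - destruct (Hw j) as [Hwm Hwb].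
      destruct (lambda1_exists p a b thm thp J (w j) Hp Hab Hwm Hthm Hwb HJ (t (pred j)) (t j)) as [L HL].
      + apply PB; lia. + unfold t. replace j with (S (pred j)) at 2 by lia. rewrite S_INR. lra. + apply PB; auto.
      + exists L; auto.
    - exists 0. intros; lia.
    - exists 0. intros; lia. }
  destruct (functional_choice _ HLex) as [Lf HLf].
  assert (HLb : forall j, (1 <= j <= S k)%nat -> 0 <= Lf j <= Kl / thm).
  { intros j Hj. destruct (Hw j) as [Hwm Hwb]. split.
    - apply lambda1_nonneg with p (w j) (t (pred j)) (t j); [|apply HLf; auto].
      intros x Hx. pose proof (PB (pred j) ltac:(lia)). pose proof (PB j ltac:(lia)). destruct (Hwb x ltac:(lra)). lra.
    - assert (El : t j - t (pred j) = l).
      { unfold t. replace j with (S (pred j)) at 1 by lia. rewrite S_INR. ring. }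
      pose proof (lambda1_bound p a b thm thp J (w j) Hp Hab Hwm Hthm Hwb HJ (t (pred j)) (t j) (Lf j)) as B.
      rewrite El in B. apply B; [apply PB; lia| |apply PB; lia|apply HLf; auto]. lra. }
  set (W := fun j => co j * Lf j).
  destruct (vm_spec W k) as [Hv1 [j0 [Hj0 Ev]]].
  assert (HcV : c <= vm W k).
  { destruct Hc as [Hc1 _]. apply Hc1. exists t. split; auto. exists Lf. split; [|split].
    - intros j Hj. apply HLf; auto.
    - intros j Hj. apply Hv1; auto.
    - exists j0. split; auto. }
  assert (HcM : c <= Rmax s 1 * (Kl / thm)).
  { eapply Rle_trans; [apply HcV|]. rewrite Ev. unfold W. destruct (Hco j0). destruct (HLb j0 Hj0).
    apply Rmult_le_compat; lra. }
  pose proof HW as [_ [_ [_ [Hua [Hu Hub]]]]].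
  assert (Hucont := indef_cont a b u g Hab Hu Hua).
  set (Rhs := fun x => c / s * m x * pw (pos_part (u x)) (p - 1) - c * n x * pw (neg_part (u x)) (p - 1)).
  assert (Hweak' : forall phi psi, W0 p a b phi psi -> exists J0,
      McShane_int (fun x => phip p (g x) * psi x) a b J0 /\ McShane_int (fun x => Rhs x * phi x) a b J0).
  { intros phi psi Hpp. apply Hweak; auto. }
  assert (HJpos : 0 < J).
  { pose proof (J_ge p J (1/2) Hp HJ ltac:(lra)). pose proof (FR_incr p Hp 0 (1/2) ltac:(lra) ltac:(lra)).
    rewrite FR_0 in H0. lra. }
  assert (HPI : 0 < PI) by (rewrite EPI; pose proof (Rpower_pos (p - 1) (1 / p)); nra).
  assert (EKl : Kl = Rpower PI p * Rpower (INR (S k)) p * Rpower (b - a) (- p)).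
  { unfold Kl. rewrite <- EPI. unfold l.
    replace (PI / ((b - a) / INR (S k))) with (PI * INR (S k) * / (b - a)) by (field; lra).
    rewrite <- !Rpower_mult_distr; try (apply Rmult_lt_0_compat); try lra; try (apply Rinv_0_lt_compat; lra).
    rewrite Rpower_Ropp, Rpower_inv by lra. auto. }
  assert (EC : C = thp / thm * Kl) by (rewrite EKl; reflexivity).
  assert (Hgam : Rmax s 1 = s * gamma s).
  { unfold gamma, Rmax. destruct (Rle_dec 1 s); destruct (Rle_dec s 1); try field; lra. }
  split.
  -
    destruct Hpos as [H1 [H2 [H3 [Hin [Hc1 Hd1]]]]].
    assert (Ecp : u cp = 0).
    { destruct (Rle_or_lt (u cp) 0) as [Hle|]; [|contradiction].
      destruct Hle as [Hlt|Heq0]; [|auto]. exfalso.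
      destruct (Hucont cp (- u cp) ltac:(lra) ltac:(lra)) as [eta [Heta Hx]].
      set (x := cp + Rmin eta (dp - cp) / 2).
      assert (Hm1 : 0 < Rmin eta (dp - cp)) by (apply Rmin_glb_lt; lra).
      assert (Hm2 : Rmin eta (dp - cp) <= eta) by apply Rmin_l. assert (Hm3 : Rmin eta (dp - cp) <= dp - cp) by apply Rmin_r.
      specialize (Hx x ltac:(unfold x; lra) ltac:(unfold x; rewrite Rabs_right; lra)).
      specialize (Hin x ltac:(unfold x; lra)). apply Rabs_def2 in Hx. lra. }
    assert (Edp : u dp = 0).
    { destruct (Rle_or_lt (u dp) 0) as [Hle|]; [|contradiction].
      destruct Hle as [Hlt|Heq0]; [|auto]. exfalso.
      destruct (Hucont dp (- u dp) ltac:(lra) ltac:(lra)) as [eta [Heta Hx]].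
      set (x := dp - Rmin eta (dp - cp) / 2).
      assert (Hm1 : 0 < Rmin eta (dp - cp)) by (apply Rmin_glb_lt; lra).
      assert (Hm2 : Rmin eta (dp - cp) <= eta) by apply Rmin_l. assert (Hm3 : Rmin eta (dp - cp) <= dp - cp) by apply Rmin_r.
      specialize (Hx x ltac:(unfold x; lra) ltac:(unfold x; rewrite Rabs_left; lra)).
      specialize (Hin x ltac:(unfold x; lra)). apply Rabs_def2 in Hx. lra. }
    intros L HL.
    assert (HLK : L <= thp * (c / s)).
    { refine (nodal_core p a b u g Rhs cp dp (thp * (c / s)) Hp H1 H2 H3 HW Ecp Edp _ Hweak' _ _ L HL).
      - exists ((cp + dp) / 2). split; [lra|]. specialize (Hin ((cp + dp) / 2) ltac:(lra)). lra.
      - apply Rmult_le_pos; [lra|]. unfold Rdiv; apply Rmult_le_pos; [lra|apply Rlt_le, Rinv_0_lt_compat; lra].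
      - intros x Hx. specialize (Hin x Hx). unfold Rhs, pos_part, neg_part.
        rewrite (Rmax_left (u x)) by lra. rewrite (Rmax_right (- u x)) by lra. rewrite pw_0.
        rewrite Rabs_right by lra. destruct (Hmn x ltac:(lra)) as [[Hm1 Hm2] _].
        replace ((c / s * m x * pw (u x) (p - 1) - c * n x * 0) * u x) with (c / s * m x * (pw (u x) (p - 1) * u x)) by ring.
        rewrite pw_mul by auto. pose proof (pw_nonneg (u x) p).
        assert (0 <= c / s) by (unfold Rdiv; apply Rmult_le_pos; [lra|apply Rlt_le, Rinv_0_lt_compat; lra]).
        replace (thp * (c / s) * pw (u x) p) with (c / s * thp * pw (u x) p) by ring.
        apply Rmult_le_compat_r; auto. apply Rmult_le_compat_l; auto. }
    rewrite EC. eapply Rle_trans; [apply HLK|].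
    replace (thp / thm * Kl * gamma s) with (thp * ((Rmax s 1 * (Kl / thm)) / s)).
    + apply Rmult_le_compat_l; [lra|]. unfold Rdiv at 1. apply Rmult_le_compat_r; [apply Rlt_le, Rinv_0_lt_compat; lra|auto].
    + rewrite Hgam. field. lra.
  -
    destruct Hneg as [H1 [H2 [H3 [Hin [Hc1 Hd1]]]]].
    assert (Ecp : u cm = 0).
    { destruct (Rle_or_lt 0 (u cm)) as [Hle|]; [|contradiction].
      destruct Hle as [Hlt|Heq0]; [|auto]. exfalso.
      destruct (Hucont cm (u cm) ltac:(lra) ltac:(lra)) as [eta [Heta Hx]].
      set (x := cm + Rmin eta (dm - cm) / 2).
      assert (Hm1 : 0 < Rmin eta (dm - cm)) by (apply Rmin_glb_lt; lra).
      assert (Hm2 : Rmin eta (dm - cm) <= eta) by apply Rmin_l. assert (Hm3 : Rmin eta (dm - cm) <= dm - cm) by apply Rmin_r.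
      specialize (Hx x ltac:(unfold x; lra) ltac:(unfold x; rewrite Rabs_right; lra)).
      specialize (Hin x ltac:(unfold x; lra)). apply Rabs_def2 in Hx. lra. }
    assert (Edp : u dm = 0).
    { destruct (Rle_or_lt 0 (u dm)) as [Hle|]; [|contradiction].
      destruct Hle as [Hlt|Heq0]; [|auto]. exfalso.
      destruct (Hucont dm (u dm) ltac:(lra) ltac:(lra)) as [eta [Heta Hx]].
      set (x := dm - Rmin eta (dm - cm) / 2).
      assert (Hm1 : 0 < Rmin eta (dm - cm)) by (apply Rmin_glb_lt; lra).
      assert (Hm2 : Rmin eta (dm - cm) <= eta) by apply Rmin_l. assert (Hm3 : Rmin eta (dm - cm) <= dm - cm) by apply Rmin_r.
      specialize (Hx x ltac:(unfold x; lra) ltac:(unfold x; rewrite Rabs_left; lra)).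
      specialize (Hin x ltac:(unfold x; lra)). apply Rabs_def2 in Hx. lra. }
    intros L HL.
    assert (HLK : L <= thp * c).
    { refine (nodal_core p a b u g Rhs cm dm (thp * c) Hp H1 H2 H3 HW Ecp Edp _ Hweak' _ _ L HL).
      - exists ((cm + dm) / 2). split; [lra|]. specialize (Hin ((cm + dm) / 2) ltac:(lra)). lra.
      - apply Rmult_le_pos; lra.
      - intros x Hx. specialize (Hin x Hx). unfold Rhs, pos_part, neg_part.
        rewrite (Rmax_right (u x)) by lra. rewrite (Rmax_left (- u x)) by lra. rewrite pw_0.
        rewrite Rabs_left by lra. destruct (Hmn x ltac:(lra)) as [_ [Hn1 Hn2]].
        replace ((c / s * m x * 0 - c * n x * pw (- u x) (p - 1)) * u x) with (c * n x * (pw (- u x) (p - 1) * - u x)) by ring.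
        rewrite pw_mul by lra. pose proof (pw_nonneg (- u x) p).
        replace (thp * c * pw (- u x) p) with (c * thp * pw (- u x) p) by ring.
        apply Rmult_le_compat_r; auto. apply Rmult_le_compat_l; auto. }
    rewrite EC. eapply Rle_trans; [apply HLK|].
    replace (thp / thm * Kl * s * gamma s) with (thp * (Rmax s 1 * (Kl / thm))).
    + apply Rmult_le_compat_l; lra.
    + rewrite Hgam. field. lra.
Qed.
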